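(* Let $F$, $\mathcal K_\alpha$ be as in the context. For any $\alpha\in\{0,1\}^\infty$, $$\underline{\dim}_B(\mathcal K_\alpha)=\bar\lambda_\alpha\log_5 13+(1-\bar\lambda_\alpha)\log_5 44,\qquad \overline{\dim}_B(\mathcal K_\alpha)=\underline\lambda_\alpha\log_5 13+(1-\underline\lambda_\alpha)\log_5 44.$$ If $\alpha$ is preperiodic, then $\dim_H(\mathcal K_\alpha)=\dim_B(\mathcal K_\alpha)=\lambda_\alpha\log_5 13+(1-\lambda_\alpha)\log_5 44$.
   Context: Let $I=[0,1]^3$. Let $\mathcal D_0=\{(i,2,2),(2,i,2),(2,2,i): i=0,1,2,3,4\}$ (13 elements) and $\mathcal D_1=\{d\in\{0,\ldots,4\}^3:\ \text{at least two coordinates of } d \text{ lie in }\{0,4\}\}$ (44 elements). For $i=0,1$ let $T_i(A)=\bigcup_{d\in\mathcal D_i}\frac{d+A}{5}$ for $A\subset\mathbb R^3$, and $T_{\alpha_1\cdots\alpha_k}=T_{\alpha_1}\circ\cdots\circ T_{\alpha_k}$. For $\alpha=\alpha_1\alpha_2\ldots\in\{0,1\}^\infty$ let $\mathcal K_\alpha=\bigcap_{k\ge1}T_{\alpha_1\cdots\alpha_k}(I)$ (these are the connected components of the fractal cube $F=\frac{F+\mathcal D_0\cup\mathcal D_1}{5}$). For $m\in\mathbb N$ let $\lambda_m$ be the proportion of zeros among $\alpha_1,\ldots,\alpha_m$; set $\bar\lambda_\alpha=\limsup_{m\to\infty}\lambda_m$, $\underline\lambda_\alpha=\liminf_{m\to\infty}\lambda_m$,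 and $\lambda_\alpha=\lim_m\lambda_m$ when it exists (for preperiodic $\alpha$ it exists and equals the proportion of zeros in a period). $\underline{\dim}_B,\overline{\dim}_B,\dim_B,\dim_H$ denote lower/upper box, box and Hausdorff dimension. *)

(* Defs.v *)
From Stdlib Require Import Reals Lra.
From Coquelicot Require Import Coquelicot.
Open Scope R_scope.

Definition pt : Type := (R * R * R)%type.

Definition dist3 (p q : pt) : R :=
  match p, q with
  | (x1, y1, z1), (x2, y2, z2) =>
      sqrt ((x1 - x2) ^ 2 + (y1 - y2) ^ 2 + (z1 - z2) ^ 2)
  end.

Definition diam_le (U : pt -> Prop) (r : R) : Prop :=
  forall p q, U p -> U q -> dist3 p q <= r.

Definition cubeI (p : pt) : Prop :=
  match p with
  | (x, y, z) => 0 <= x <= 1 /\ 0 <= y <= 1 /\ 0 <= z <= 1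
  end.

(** Digit sets; digits alpha_k are booleans: false = 0, true = 1. *)
Definition D0 (a b c : nat) : Prop :=
  (a <= 4 /\ b = 2 /\ c = 2)%nat \/ (a = 2 /\ b <= 4 /\ c = 2)%nat
  \/ (a = 2 /\ b = 2 /\ c <= 4)%nat.

Definition in04 (a : nat) : Prop := a = 0%nat \/ a = 4%nat.

Definition D1 (a b c : nat) : Prop :=
  (a <= 4 /\ b <= 4 /\ c <= 4)%nat /\
  ((in04 a /\ in04 b) \/ (in04 a /\ in04 c) \/ (in04 b /\ in04 c)).

Definition Dset (b : bool) : nat -> nat -> nat -> Prop :=
  if b then D1 else D0.

(** T_b(A) = union over d in D_b of (d + A)/5 ; p in (d+A)/5 iff 5p - d in A. *)
Definition Tmap (b : bool) (A : pt -> Prop) (p : pt) : Prop :=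
  match p with
  | (x, y, z) => exists a b' c : nat, Dset b a b' c /\
      A (5 * x - INR a, 5 * y - INR b', 5 * z - INR c)
  end.

Fixpoint iterT (alpha : nat -> bool) (m k : nat) (A : pt -> Prop) : pt -> Prop :=
  match k with
  | O => A
  | S k' => Tmap (alpha m) (iterT alpha (S m) k' A)
  end.

(** K_alpha = intersection over k >= 1 of T_{alpha_1 ... alpha_k}(I),
    where alpha_{j+1} is [alpha j]. *)
Definition Kalpha (alpha : nat -> bool) (p : pt) : Prop :=
  forall k : nat, (1 <= k)%nat -> iterT alpha 0 k cubeI p.

Fixpoint nzeros (alpha : nat -> bool) (m : nat) : nat :=
  match m with
  | O => O
  | S m' => (nzeros alpha m' + (if alpha m' then 0 else 1))%nat
  end.

Definition lambda_m (alpha : nat -> bool) (m : nat) : R :=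
  INR (nzeros alpha m) / INR m.

Definition lambda_sup (alpha : nat -> bool) : Rbar := LimSup_seq (lambda_m alpha).
Definition lambda_inf (alpha : nat -> bool) : Rbar := LimInf_seq (lambda_m alpha).
Definition lambda_lim (alpha : nat -> bool) : Rbar := Lim_seq (lambda_m alpha).

Definition preperiodic (alpha : nat -> bool) : Prop :=
  exists n0 per : nat, (0 < per)%nat /\
    forall n, (n0 <= n)%nat -> alpha (n + per)%nat = alpha n.

Definition covnum (delta : R) (E : pt -> Prop) : Rbar :=
  Glb_Rbar (fun x => exists n : nat, x = INR n /\
     exists U : nat -> pt -> Prop,
       (forall i, (i < n)%nat -> diam_le (U i) delta) /\
       (forall p, E p -> exists i, (i < n)%nat /\ U i p)).

Definition box_ratio (E : pt -> Prop) (delta : R) : Rbar :=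
  match covnum delta E with
  | Finite n => Finite (ln n / - ln delta)
  | p_infty => p_infty
  | m_infty => m_infty
  end.

(** liminf / limsup as delta -> 0+ *)
Definition lower_box_dim (E : pt -> Prop) : Rbar :=
  Rbar_lub (fun v => exists eps, 0 < eps /\
     v = Rbar_glb (fun w => exists delta, 0 < delta < eps /\ w = box_ratio E delta)).

Definition upper_box_dim (E : pt -> Prop) : Rbar :=
  Rbar_glb (fun v => exists eps, 0 < eps /\
     v = Rbar_lub (fun w => exists delta, 0 < delta < eps /\ w = box_ratio E delta)).

(** H^s_delta(E): inf of sum r_i^s over countable covers by sets U_i with
    diam U_i <= r_i, 0 < r_i <= delta (infimum of the empty set = +oo). *)
Definition hausdorff_delta (s delta : R) (E : pt -> Prop) : Rbar :=
  Glb_Rbar (fun v => exists (U : nat -> pt -> Prop) (r : nat -> R),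
     (forall i, 0 < r i <= delta) /\
     (forall i, diam_le (U i) (r i)) /\
     (forall p, E p -> exists i, U i p) /\
     is_series (fun i => Rpower (r i) s) v).

Definition hausdorff_measure (s : R) (E : pt -> Prop) : Rbar :=
  Rbar_lub (fun x => exists delta, 0 < delta /\ x = hausdorff_delta s delta E).

Definition hausdorff_dim (E : pt -> Prop) : Rbar :=
  Glb_Rbar (fun s => 0 <= s /\ hausdorff_measure s E = Finite 0).

Definition log5 (x : R) : R := ln x / ln 5.

(* Main.v *)
Require Import Defs.
From Stdlib Require Import Reals.
From Coquelicot Require Import Coquelicot.
Open Scope R_scope.
From Stdlib Require Import Lra Lia Psatz List Classical ClassicalEpsilon.
Import ListNotations.
Open Scope R_scope.

Definition trip := (nat * nat * nat)%type.
Definition p1 (d : trip) : nat := fst (fst d).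
Definition p2 (d : trip) : nat := snd (fst d).
Definition p3 (d : trip) : nat := snd d.

Definition in04b (x : nat) : bool := Nat.eqb x 0 || Nat.eqb x 4.
Definition db (b : bool) (d : trip) : bool :=
  match d with (x, y, z) =>
  if b then (in04b x && in04b y) || (in04b x && in04b z) || (in04b y && in04b z)
  else (Nat.eqb y 2 && Nat.eqb z 2) || (Nat.eqb x 2 && Nat.eqb z 2) || (Nat.eqb x 2 && Nat.eqb y 2)
  end.
Definition allt : list trip :=
  flat_map (fun x => flat_map (fun y => map (fun z => (x, y, z)) (seq 0 5)) (seq 0 5)) (seq 0 5).
Definition digs (b : bool) : list trip := filter (db b) allt.

Lemma in_allt x y z : In (x, y, z) allt <-> (x < 5 /\ y < 5 /\ z < 5)%nat.
Proof.
  unfold allt. rewrite in_flat_map. split.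
  - intros [x' [Hx H]]. rewrite in_flat_map in H. destruct H as [y' [Hy H]].
    rewrite in_map_iff in H. destruct H as [z' [E Hz]]. inversion E; subst.
    rewrite in_seq in Hx, Hy, Hz. lia.
  - intros (Hx & Hy & Hz). exists x. split. apply in_seq; lia.
    rewrite in_flat_map. exists y. split. apply in_seq; lia.
    rewrite in_map_iff. exists z. split. reflexivity. apply in_seq; lia.
Qed.

Lemma in04b_iff x : in04b x = true <-> in04 x.
Proof. unfold in04b, in04. rewrite Bool.orb_true_iff, !Nat.eqb_eq. tauto. Qed.

Lemma Dset_digs b x y z : Dset b x y z <-> In (x, y, z) (digs b).
Proof.
  unfold digs. rewrite filter_In, in_allt. unfold Dset, db.
  destruct b.
  - unfold D1. rewrite !Bool.orb_true_iff, !Bool.andb_true_iff, !in04b_iff. intuition lia.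
  - unfold D0. rewrite !Bool.orb_true_iff, !Bool.andb_true_iff, !Nat.eqb_eq. intuition lia.
Qed.

Lemma digs_bound b d : In d (digs b) -> (p1 d < 5 /\ p2 d < 5 /\ p3 d < 5)%nat.
Proof.
  destruct d as [[x y] z]. intro H. apply Dset_digs in H.
  apply Dset_digs in H. unfold digs in H. apply filter_In in H. destruct H as [H _].
  apply in_allt in H. exact H.
Qed.

Lemma digs_len b : (length (digs b) <= 44)%nat.
Proof. destruct b; vm_compute; lia. Qed.
Lemma digs_len_ge b : (13 <= length (digs b))%nat.
Proof. destruct b; vm_compute; lia. Qed.
Lemma digs_len0 : length (digs false) = 13%nat.
Proof. reflexivity. Qed.
Lemma digs_len1 : length (digs true) = 44%nat.
Proof. reflexivity. Qed.

Lemma digs_nodup b : NoDup (digs b).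
Proof.
  apply NoDup_filter. unfold allt.
  apply (NoDup_map_inv (fun d : trip => (p1 d * 25 + p2 d * 5 + p3 d)%nat)).
  replace (map _ _) with (seq 0 125) by reflexivity. apply seq_NoDup.
Qed.

Definition dflt (b : bool) : trip := if b then (0, 0, 0)%nat else (2, 2, 2)%nat.
Lemma dflt_in b : In (dflt b) (digs b).
Proof. destruct b; vm_compute; tauto. Qed.

Fixpoint valid (al : nat -> bool) (m : nat) (s : list trip) : Prop :=
  match s with
  | [] => True
  | d :: s' => In d (digs (al m)) /\ valid al (S m) s'
  end.

Fixpoint strs (al : nat -> bool) (m k : nat) : list (list trip) :=
  match k with
  | O => [[]]
  | S k' => flat_map (fun d => map (cons d) (strs al (S m) k')) (digs (al m))
  end.

Fixpoint Nm (al : nat -> bool) (m k : nat) : nat :=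
  match k with
  | O => 1%nat
  | S k' => (length (digs (al m)) * Nm al (S m) k')%nat
  end.

Fixpoint cor (p : trip -> nat) (s : list trip) : nat :=
  match s with
  | [] => 0%nat
  | d :: s' => (p d * 5 ^ length s' + cor p s')%nat
  end.

Lemma strs_spec al k : forall m s, In s (strs al m k) <-> valid al m s /\ length s = k.
Proof.
  induction k as [|k IH]; intros m s; simpl.
  - split. intros [<-|[]]. simpl; tauto. intros [_ H]. destruct s; [tauto|discriminate].
  - rewrite in_flat_map. split.
    + intros [d [Hd H]]. rewrite in_map_iff in H. destruct H as [t [<- Ht]].
      apply IH in Ht. simpl. split. tauto. f_equal; tauto.
    + intros [Hv Hl]. destruct s as [|d t]; [discriminate|]. simpl in Hv, Hl.
      exists d. split. tauto. apply in_map. apply IH. split. tauto. lia.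
Qed.

Lemma length_flat_map_const {A B} (f : A -> list B) (l : list A) c :
  (forall x, In x l -> length (f x) = c) -> length (flat_map f l) = (length l * c)%nat.
Proof.
  induction l as [|x l IH]; simpl; intros H. reflexivity.
  rewrite length_app, H by tauto. rewrite IH by (intros; apply H; tauto). lia.
Qed.

Lemma strs_len al k : forall m, length (strs al m k) = Nm al m k.
Proof.
  induction k as [|k IH]; intros m; simpl. reflexivity.
  apply length_flat_map_const. intros. rewrite length_map. apply IH.
Qed.

Lemma NoDup_flat_map_disj {A B} (f : A -> list B) (l : list A) :
  NoDup l -> (forall x, In x l -> NoDup (f x)) ->
  (forall x y z, In x l -> In y l -> In z (f x) -> In z (f y) -> x = y) ->
  NoDup (flat_map f l).
Proof.
  induction l as [|x l IH]; simpl; intros Hl Hf Hd. constructor.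
  inversion Hl; subst. apply NoDup_app. apply Hf; tauto.
  apply IH; auto. intros; eapply Hd; eauto.
  intros z Hz1 Hz2. rewrite in_flat_map in Hz2. destruct Hz2 as [y [Hy Hz2]].
  assert (x = y) by (eapply Hd; eauto). subst. contradiction.
Qed.

Lemma strs_nodup al k : forall m, NoDup (strs al m k).
Proof.
  induction k as [|k IH]; intros m; simpl. repeat constructor; simpl; tauto.
  apply NoDup_flat_map_disj. apply digs_nodup.
  intros. apply NoDup_map_NoDup_ForallPairs. intros a b _ _ E; inversion E; auto. apply IH.
  intros x y z _ _ H1 H2. rewrite in_map_iff in H1, H2.
  destruct H1 as [t1 [<- _]]. destruct H2 as [t2 [E _]]. inversion E; auto.
Qed.

Lemma Nm_add al a : forall m b, Nm al m (a + b) = (Nm al m a * Nm al (m + a) b)%nat.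
Proof.
  induction a as [|a IH]; intros m b; simpl. rewrite !Nat.add_0_r; reflexivity.
  rewrite IH. replace (S m + a)%nat with (m + S a)%nat by lia. ring.
Qed.

Lemma Nm_pos al k : forall m, (1 <= Nm al m k)%nat.
Proof.
  induction k as [|k IH]; intros m; simpl. lia. pose proof (digs_len_ge (al m)).
  specialize (IH (S m)). nia.
Qed.

Lemma Nm_S al m k : Nm al m (S k) = (Nm al m k * length (digs (al (m + k))))%nat.
Proof.
  replace (S k) with (k + 1)%nat by lia. rewrite Nm_add. simpl. lia.
Qed.

Lemma valid_app al s : forall m t, valid al m (s ++ t) <-> valid al m s /\ valid al (m + length s) t.
Proof.
  induction s as [|d s IH]; intros m t; simpl. rewrite Nat.add_0_r. tauto.
  rewrite IH. replace (S m + length s)%nat with (m + S (length s))%nat by lia. tauto.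
Qed.

Lemma valid_bound al s : forall m p, (p = p1 \/ p = p2 \/ p = p3) -> valid al m s ->
  forall d, In d s -> (p d < 5)%nat.
Proof.
  induction s as [|d s IH]; simpl; intros m p Hp Hv d' Hd. tauto.
  destruct Hd as [<-|Hd].
  - pose proof (digs_bound _ _ (proj1 Hv)). destruct Hp as [-> | [-> | ->]]; lia.
  - exact (IH (S m) p Hp (proj2 Hv) d' Hd).
Qed.

Lemma cor_lt al p s : forall m, (p = p1 \/ p = p2 \/ p = p3) -> valid al m s ->
  (cor p s < 5 ^ length s)%nat.
Proof.
  induction s as [|d s IH]; simpl; intros m Hp Hv. lia.
  assert (p d < 5)%nat by (eapply (valid_bound al (d :: s)); simpl; eauto).
  specialize (IH (S m) Hp (proj2 Hv)). nia.
Qed.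

Lemma cor_app p s t : cor p (s ++ t) = (cor p s * 5 ^ length t + cor p t)%nat.
Proof.
  induction s as [|d s IH]; simpl. reflexivity.
  rewrite IH, length_app, Nat.pow_add_r. nia.
Qed.

Lemma base_uniq a b a' b' M : (b < M)%nat -> (b' < M)%nat -> (a * M + b = a' * M + b')%nat -> a = a' /\ b = b'.
Proof.
  intros. destruct (Nat.lt_trichotomy a a') as [H2|[H2|H2]].
  - exfalso. assert (a * M + M <= a' * M)%nat by nia. lia.
  - subst. lia.
  - exfalso. assert (a' * M + M <= a * M)%nat by nia. lia.
Qed.

Lemma cor_inj al s : forall m s', valid al m s -> valid al m s' -> length s = length s' ->
  cor p1 s = cor p1 s' -> cor p2 s = cor p2 s' -> cor p3 s = cor p3 s' -> s = s'.
Proof.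
  induction s as [|d s IH]; intros m s' Hv Hv' Hl E1 E2 E3; destruct s' as [|d' s']; try discriminate.
  reflexivity.
  simpl in *. injection Hl as Hl.
  assert (Hp : forall p, (p = p1 \/ p = p2 \/ p = p3) -> cor p (d :: s) = cor p (d' :: s') -> p d = p d' /\ cor p s = cor p s').
  { intros p Hp E. simpl in E. rewrite <- Hl in E. apply (base_uniq _ _ _ _ (5 ^ length s)%nat).
    exact (cor_lt al p s (S m) Hp (proj2 Hv)). rewrite Hl. exact (cor_lt al p s' (S m) Hp (proj2 Hv')). lia. }
  destruct (Hp p1) as [A1 B1]; auto. destruct (Hp p2) as [A2 B2]; auto. destruct (Hp p3) as [A3 B3]; auto.
  f_equal. destruct d as [[x y] z], d' as [[x' y'] z']. unfold p1, p2, p3 in *; simpl in *; subst; reflexivity.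
  apply (IH (S m) s'); tauto.
Qed.

Lemma valid_nth al s : forall m d j, valid al m s -> (j < length s)%nat -> In (nth j s d) (digs (al (m + j)%nat)).
Proof.
  induction s as [|x s IH]; simpl; intros m d j Hv Hj. lia.
  destruct j. rewrite Nat.add_0_r. tauto.
  replace (m + S j)%nat with (S m + j)%nat by lia. apply IH; tauto || lia.
Qed.

Lemma firstn_nth_map {A} (s : list A) d : forall k, (k <= length s)%nat -> firstn k s = map (fun j => nth j s d) (seq 0 k).
Proof.
  induction s as [|x s IH]; intros k Hk; destruct k; simpl in *; try reflexivity; try lia.
  f_equal. rewrite IH by lia. rewrite <- seq_shift, map_map. reflexivity.
Qed.

Definition inQ (s : list trip) (P : pt) : Prop :=
  match P with (x, y, z) =>
    cubeI (5 ^ length s * x - INR (cor p1 s), 5 ^ length s * y - INR (cor p2 s),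
           5 ^ length s * z - INR (cor p3 s)) end.

Lemma INR5 : INR 5 = 5.
Proof. simpl. lra. Qed.

Lemma INR_cor_cons p d s : INR (cor p (d :: s)) = INR (p d) * 5 ^ length s + INR (cor p s).
Proof. simpl cor. rewrite plus_INR, mult_INR, pow_INR, INR5. reflexivity. Qed.

Lemma iter_char al k : forall m A x y z, iterT al m k A (x, y, z) <->
  exists s, valid al m s /\ length s = k /\
    A (5 ^ k * x - INR (cor p1 s), 5 ^ k * y - INR (cor p2 s), 5 ^ k * z - INR (cor p3 s)).
Proof.
  induction k as [|k IH]; intros m A x y z.
  - simpl. split.
    + intros H. exists []. simpl. split; [tauto|split; [reflexivity|]].
      replace (1 * x - 0) with x by ring. replace (1 * y - 0) with y by ring.
      replace (1 * z - 0) with z by ring. exact H.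
    + intros [s [_ [Hl H]]]. destruct s; [|discriminate]. simpl in H.
      replace (1 * x - 0) with x in H by ring. replace (1 * y - 0) with y in H by ring.
      replace (1 * z - 0) with z in H by ring. exact H.
  - simpl iterT. unfold Tmap. split.
    + intros [a [b [c [Hd H]]]]. apply IH in H. destruct H as [s [Hv [Hl H]]].
      exists ((a, b, c) :: s). split. simpl. split. apply Dset_digs; exact Hd. exact Hv.
      split. simpl; lia.
      rewrite !INR_cor_cons, Hl. change (p1 (a, b, c)) with a; change (p2 (a, b, c)) with b; change (p3 (a, b, c)) with c.
      replace (5 ^ S k * x - (INR a * 5 ^ k + INR (cor p1 s))) with (5 ^ k * (5 * x - INR a) - INR (cor p1 s)) by (simpl; ring).
      replace (5 ^ S k * y - (INR b * 5 ^ k + INR (cor p2 s))) with (5 ^ k * (5 * y - INR b) - INR (cor p2 s)) by (simpl; ring).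
      replace (5 ^ S k * z - (INR c * 5 ^ k + INR (cor p3 s))) with (5 ^ k * (5 * z - INR c) - INR (cor p3 s)) by (simpl; ring).
      exact H.
    + intros [s [Hv [Hl H]]]. destruct s as [|[[a b] c] s]; [discriminate|].
      simpl in Hv, Hl. injection Hl as Hl. exists a, b, c. split. apply Dset_digs; tauto.
      apply IH. exists s. split. tauto. split. exact Hl.
      rewrite !INR_cor_cons, Hl in H. change (p1 (a, b, c)) with a in H; change (p2 (a, b, c)) with b in H; change (p3 (a, b, c)) with c in H.
      replace (5 ^ S k * x - (INR a * 5 ^ k + INR (cor p1 s))) with (5 ^ k * (5 * x - INR a) - INR (cor p1 s)) in H by (simpl; ring).
      replace (5 ^ S k * y - (INR b * 5 ^ k + INR (cor p2 s))) with (5 ^ k * (5 * y - INR b) - INR (cor p2 s)) in H by (simpl; ring).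
      replace (5 ^ S k * z - (INR c * 5 ^ k + INR (cor p3 s))) with (5 ^ k * (5 * z - INR c) - INR (cor p3 s)) in H by (simpl; ring).
      exact H.
Qed.

Lemma K_char al P : Kalpha al P <-> forall k, (1 <= k)%nat -> exists s, In s (strs al 0 k) /\ inQ s P.
Proof.
  destruct P as [[x y] z]. unfold Kalpha. split.
  - intros H k Hk. apply H in Hk. apply iter_char in Hk. destruct Hk as [s [Hv [Hl H']]].
    exists s. split. apply strs_spec; tauto. unfold inQ. rewrite Hl. exact H'.
  - intros H k Hk. apply iter_char. destruct (H k Hk) as [s [Hs H']]. apply strs_spec in Hs.
    exists s. split. tauto. split. tauto. unfold inQ in H'. destruct Hs as [_ Hl]. rewrite Hl in H'. exact H'.
Qed.

Definition vpath (al : nat -> bool) (e : nat -> trip) : Prop := forall j, In (e j) (digs (al j)).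
Definition prefx (e : nat -> trip) (k : nat) : list trip := map e (seq 0 k).

Lemma map_seq_valid al e : vpath al e -> forall k m, valid al m (map e (seq m k)).
Proof. intros He k. induction k as [|k IH]; intros m; simpl. tauto. split. apply He. apply IH. Qed.

Lemma pre_len e k : length (prefx e k) = k.
Proof. unfold prefx. rewrite length_map, length_seq. reflexivity. Qed.

Lemma pre_strs al e k : vpath al e -> In (prefx e k) (strs al 0 k).
Proof. intros He. apply strs_spec. split. apply map_seq_valid; auto. apply pre_len. Qed.

Lemma pre_split e k n : (k <= n)%nat -> prefx e n = prefx e k ++ map e (seq k (n - k)).
Proof.
  intros H. unfold prefx. replace n with (k + (n - k))%nat at 1 by lia. rewrite seq_app, map_app. reflexivity.
Qed.

Lemma pow5_pos k : 0 < 5 ^ k.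
Proof. apply pow_lt. lra. Qed.

Lemma INR_pow5 k : INR (5 ^ k)%nat = 5 ^ k.
Proof. rewrite pow_INR, INR5. reflexivity. Qed.

Definition Sp (p : trip -> nat) (e : nat -> trip) (k : nat) : R := INR (cor p (prefx e k)) / 5 ^ k.

Lemma Sp_bounds al p e k n : (p = p1 \/ p = p2 \/ p = p3) -> vpath al e -> (k <= n)%nat ->
  Sp p e k <= Sp p e n <= Sp p e k + / 5 ^ k.
Proof.
  intros Hp He Hkn. unfold Sp. rewrite (pre_split e k n Hkn), cor_app.
  rewrite length_map, length_seq.
  assert (Ht : (cor p (map e (seq k (n - k))) < 5 ^ (n - k))%nat).
  { pose proof (cor_lt al p (map e (seq k (n-k))) k Hp (map_seq_valid al e He _ _)) as Ht. rewrite length_map, length_seq in Ht. exact Ht. }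
  apply lt_INR in Ht. rewrite INR_pow5 in Ht.
  rewrite plus_INR, mult_INR, INR_pow5.
  replace (5 ^ n) with (5 ^ k * 5 ^ (n - k)) by (rewrite <- pow_add; f_equal; lia).
  pose proof (pow5_pos k). pose proof (pow5_pos (n - k)). pose proof (pos_INR (cor p (map e (seq k (n - k))))).
  set (A := INR (cor p (prefx e k))) in *. set (B := INR (cor p (map e (seq k (n - k))))) in *.
  set (u := 5 ^ k) in *. set (v := 5 ^ (n - k)) in *.
  replace ((A * v + B) / (u * v)) with (A / u + B / (u * v)) by (field; lra).
  split.
  - assert (0 <= B / (u * v)) by (apply Rdiv_le_0_compat; nra). lra.
  - assert (B / (u * v) <= / u).
    { apply (Rmult_le_reg_r (u * v)). nra.
      replace (B / (u * v) * (u * v)) with B by (field; lra).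
      replace (/ u * (u * v)) with v by (field; lra). lra. }
    lra.
Qed.

Definition Eset (p : trip -> nat) (e : nat -> trip) (x : R) : Prop := exists n, x = Rmin (Sp p e n) 1.

Lemma Eset_bound p e : bound (Eset p e).
Proof. exists 1. intros x [n ->]. apply Rmin_r. Qed.
Lemma Eset_ne p e : exists x, Eset p e x.
Proof. exists (Rmin (Sp p e 0) 1). exists 0%nat. reflexivity. Qed.

Definition Xc (p : trip -> nat) (e : nat -> trip) : R :=
  proj1_sig (completeness (Eset p e) (Eset_bound p e) (Eset_ne p e)).

Lemma Xc_bounds al p e k : (p = p1 \/ p = p2 \/ p = p3) -> vpath al e ->
  Sp p e k <= Xc p e <= Sp p e k + / 5 ^ k.
Proof.
  intros Hp He. unfold Xc. destruct (completeness _ _ _) as [X [Hub Hlub]]. simpl.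
  assert (Hle1 : forall n, Sp p e n <= 1).
  { intros n. destruct (Sp_bounds al p e 0 n Hp He ltac:(lia)) as [_ H].
    unfold Sp at 2 in H. simpl in H. lra. }
  split.
  - replace (Sp p e k) with (Rmin (Sp p e k) 1). apply Hub. exists k. reflexivity.
    apply Rmin_left. apply Hle1.
  - apply Hlub. intros x [n ->]. eapply Rle_trans. apply Rmin_l.
    destruct (Compare_dec.le_lt_dec k n) as [H|H].
    + apply (Sp_bounds al p e k n Hp He H).
    + destruct (Sp_bounds al p e n k Hp He ltac:(lia)) as [H1 _].
      pose proof (pow5_pos k). assert (0 < / 5 ^ k) by (apply Rinv_0_lt_compat; lra). lra.
Qed.

Definition pi (e : nat -> trip) : pt := (Xc p1 e, Xc p2 e, Xc p3 e).

Lemma cube_of_Sp k c X : c / 5 ^ k <= X <= c / 5 ^ k + / 5 ^ k -> 0 <= 5 ^ k * X - c <= 1.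
Proof.
  intros [H1 H2]. pose proof (pow5_pos k).
  apply (Rmult_le_compat_l (5 ^ k)) in H1; [|lra]. apply (Rmult_le_compat_l (5 ^ k)) in H2; [|lra].
  replace (5 ^ k * (c / 5 ^ k)) with c in H1 by (field; lra).
  replace (5 ^ k * (c / 5 ^ k + / 5 ^ k)) with (c + 1) in H2 by (field; lra). lra.
Qed.

Lemma pi_inQ al e k : vpath al e -> inQ (prefx e k) (pi e).
Proof.
  intros He. unfold inQ, pi, cubeI. rewrite pre_len.
  split; [|split]; apply cube_of_Sp.
  exact (Xc_bounds al p1 e k (or_introl eq_refl) He).
  exact (Xc_bounds al p2 e k (or_intror (or_introl eq_refl)) He).
  exact (Xc_bounds al p3 e k (or_intror (or_intror eq_refl)) He).
Qed.

Lemma pi_K al e : vpath al e -> Kalpha al (pi e).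
Proof.
  intros He. apply K_char. intros k _. exists (prefx e k). split. apply pre_strs; auto. apply (pi_inQ al); auto.
Qed.

Definition ext (al : nat -> bool) (s : list trip) : nat -> trip := fun j => nth j s (dflt (al j)).

Lemma ext_vpath al s : valid al 0 s -> vpath al (ext al s).
Proof.
  intros Hv j. unfold ext. destruct (Compare_dec.lt_dec j (length s)).
  - apply (valid_nth al s 0 _ j Hv l).
  - rewrite nth_overflow by lia. apply dflt_in.
Qed.

Lemma pre_ext al s k : (k <= length s)%nat -> prefx (ext al s) k = firstn k s.
Proof.
  intros Hk. rewrite (firstn_nth_map s (0, 0, 0)%nat k Hk). unfold prefx, ext.
  apply map_ext_in. intros j Hj. apply in_seq in Hj. apply nth_indep. lia.
Qed.

Lemma dist_x x1 y1 z1 x2 y2 z2 : Rabs (x1 - x2) <= dist3 (x1, y1, z1) (x2, y2, z2).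
Proof.
  unfold dist3. rewrite <- sqrt_Rsqr_abs. apply sqrt_le_1_alt. unfold Rsqr.
  pose proof (pow2_ge_0 (y1 - y2)). pose proof (pow2_ge_0 (z1 - z2)). simpl. lra.
Qed.
Lemma dist_y x1 y1 z1 x2 y2 z2 : Rabs (y1 - y2) <= dist3 (x1, y1, z1) (x2, y2, z2).
Proof.
  unfold dist3. rewrite <- sqrt_Rsqr_abs. apply sqrt_le_1_alt. unfold Rsqr.
  pose proof (pow2_ge_0 (x1 - x2)). pose proof (pow2_ge_0 (z1 - z2)). simpl. lra.
Qed.
Lemma dist_z x1 y1 z1 x2 y2 z2 : Rabs (z1 - z2) <= dist3 (x1, y1, z1) (x2, y2, z2).
Proof.
  unfold dist3. rewrite <- sqrt_Rsqr_abs. apply sqrt_le_1_alt. unfold Rsqr.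
  pose proof (pow2_ge_0 (x1 - x2)). pose proof (pow2_ge_0 (y1 - y2)). simpl. lra.
Qed.

Lemma dist_le x1 y1 z1 x2 y2 z2 c r : Rabs (x1 - x2) <= c -> Rabs (y1 - y2) <= c -> Rabs (z1 - z2) <= c ->
  2 * c <= r -> dist3 (x1, y1, z1) (x2, y2, z2) <= r.
Proof.
  intros Hx Hy Hz Hr. unfold dist3.
  assert (0 <= c) by (pose proof (Rabs_pos (x1 - x2)); lra).
  rewrite <- (sqrt_Rsqr r) by lra. apply sqrt_le_1_alt. unfold Rsqr.
  assert ((x1 - x2) ^ 2 <= c * c). { rewrite <- (pow2_abs (x1 - x2)). simpl. pose proof (Rabs_pos (x1 - x2)). nra. }
  assert ((y1 - y2) ^ 2 <= c * c). { rewrite <- (pow2_abs (y1 - y2)). simpl. pose proof (Rabs_pos (y1 - y2)). nra. }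
  assert ((z1 - z2) ^ 2 <= c * c). { rewrite <- (pow2_abs (z1 - z2)). simpl. pose proof (Rabs_pos (z1 - z2)). nra. }
  nra.
Qed.

Lemma coord_close k c x x' : 0 <= 5 ^ k * x - c <= 1 -> 0 <= 5 ^ k * x' - c <= 1 -> Rabs (x - x') <= / 5 ^ k.
Proof.
  intros H1 H2. pose proof (pow5_pos k).
  assert (Rabs (5 ^ k * x - 5 ^ k * x') <= 1) by (apply Rabs_le; lra).
  rewrite <- Rmult_minus_distr_l, Rabs_mult, (Rabs_pos_eq (5 ^ k)) in H0 by lra.
  apply (Rmult_le_reg_l (5 ^ k)). lra. rewrite Rinv_r by lra. exact H0.
Qed.

Lemma inQ_diam s : diam_le (inQ s) (2 / 5 ^ length s).
Proof.
  intros [[x y] z] [[x' y'] z'] H H'. unfold inQ, cubeI in H, H'.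
  apply (dist_le _ _ _ _ _ _ (/ 5 ^ length s)).
  apply (coord_close _ (INR (cor p1 s))); tauto. apply (coord_close _ (INR (cor p2 s))); tauto.
  apply (coord_close _ (INR (cor p3 s))); tauto. unfold Rdiv; lra.
Qed.

Fixpoint sumc (c : nat -> nat) (n : nat) : nat :=
  match n with O => O | S n' => (sumc c n' + c n')%nat end.

Lemma fin_choice {A} (n : nat) (Q : nat -> A -> Prop) (a0 : A) :
  (forall i, (i < n)%nat -> exists x, Q i x) -> exists f, forall i, (i < n)%nat -> Q i (f i).
Proof.
  induction n as [|n IH]; intros H.
  - exists (fun _ => a0). intros; lia.
  - destruct IH as [f Hf]. intros i Hi; apply H; lia.
    destruct (H n ltac:(lia)) as [x Hx].
    exists (fun i => if Nat.eqb i n then x else f i). intros i Hi.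
    destruct (Nat.eqb_spec i n). subst; exact Hx. apply Hf; lia.
Qed.

Lemma flat_map_len_le {A} (Bf : nat -> list A) c n :
  (forall i, (i < n)%nat -> (length (Bf i) <= c i)%nat) -> (length (flat_map Bf (seq 0 n)) <= sumc c n)%nat.
Proof.
  induction n as [|n IH]; intros H. simpl; lia.
  rewrite seq_S, flat_map_app, length_app. simpl. rewrite app_nil_r.
  specialize (IH ltac:(intros; apply H; lia)). specialize (H n ltac:(lia)). lia.
Qed.

Lemma count_cover {A} (X : list A) (n : nat) (c : nat -> nat) (P : nat -> A -> Prop) :
  NoDup X -> (forall x, In x X -> exists i, (i < n)%nat /\ P i x) ->
  (forall i, (i < n)%nat -> exists B, (length B <= c i)%nat /\ forall x, In x X -> P i x -> In x B) ->
  (length X <= sumc c n)%nat.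
Proof.
  intros HX Hc HB.
  destruct (fin_choice n (fun i B => (length B <= c i)%nat /\ forall x, In x X -> P i x -> In x B) [] HB) as [Bf HBf].
  eapply Nat.le_trans. apply (NoDup_incl_length HX (l' := flat_map Bf (seq 0 n))).
  - intros x Hx. destruct (Hc x Hx) as [i [Hi HP]]. apply in_flat_map. exists i. split.
    apply in_seq; lia. apply (proj2 (HBf i Hi)); auto.
  - apply flat_map_len_le. intros i Hi; apply (HBf i Hi).
Qed.

Definition near (s0 s : list trip) : bool :=
  Nat.leb (cor p1 s) (cor p1 s0 + 3) && Nat.leb (cor p1 s0) (cor p1 s + 3) &&
  Nat.leb (cor p2 s) (cor p2 s0 + 3) && Nat.leb (cor p2 s0) (cor p2 s + 3) &&
  Nat.leb (cor p3 s) (cor p3 s0 + 3) && Nat.leb (cor p3 s0) (cor p3 s + 3).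

Definition grid (c1 c2 c3 : nat) : list trip :=
  flat_map (fun x => flat_map (fun y => map (fun z => (x, y, z)) (seq (c3 - 3) 7)) (seq (c2 - 3) 7)) (seq (c1 - 3) 7).

Lemma grid_len c1 c2 c3 : length (grid c1 c2 c3) = 343%nat.
Proof.
  unfold grid. rewrite (length_flat_map_const _ _ 49). rewrite length_seq; reflexivity.
  intros x _. rewrite (length_flat_map_const _ _ 7). rewrite length_seq; reflexivity.
  intros y _. rewrite length_map, length_seq. reflexivity.
Qed.

Definition cor3 (s : list trip) : trip := (cor p1 s, cor p2 s, cor p3 s).

Lemma near_coord k x x0 c c0 : 0 <= 5 ^ k * x - INR c <= 1 -> 0 <= 5 ^ k * x0 - INR c0 <= 1 ->
  Rabs (x - x0) <= / 5 ^ k -> (c <= c0 + 3)%nat /\ (c0 <= c + 3)%nat.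
Proof.
  intros H1 H2 H3. pose proof (pow5_pos k).
  assert (Rabs (5 ^ k * x - 5 ^ k * x0) <= 1).
  { rewrite <- Rmult_minus_distr_l, Rabs_mult, (Rabs_pos_eq (5 ^ k)) by lra.
    apply (Rmult_le_compat_l (5 ^ k)) in H3; [|lra]. rewrite Rinv_r in H3 by lra. exact H3. }
  apply Rabs_le_between in H0.
  split; apply Nat.lt_le_incl.
  - assert (c < c0 + 3)%nat; [|lia]. apply INR_lt. rewrite plus_INR. simpl (INR 3). lra.
  - assert (c0 < c + 3)%nat; [|lia]. apply INR_lt. rewrite plus_INR. simpl (INR 3). lra.
Qed.

Lemma box_count al k (U : pt -> Prop) : diam_le U (/ 5 ^ k) ->
  exists B, (length B <= 343)%nat /\
    forall s, In s (strs al 0 k) -> (exists q, U q /\ inQ s q) -> In s B.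
Proof.
  intros HU.
  destruct (classic (exists s0, In s0 (strs al 0 k) /\ exists q, U q /\ inQ s0 q)) as [[s0 [Hs0 [q0 [Uq0 Hq0]]]]|Hno].
  - exists (filter (near s0) (strs al 0 k)). split.
    + rewrite <- (length_map cor3). rewrite <- (grid_len (cor p1 s0) (cor p2 s0) (cor p3 s0)).
      apply NoDup_incl_length.
      * apply NoDup_map_NoDup_ForallPairs. 2: apply NoDup_filter, strs_nodup.
        intros a b Ha Hb E. apply filter_In in Ha, Hb. destruct Ha as [Ha _]. destruct Hb as [Hb _]. apply strs_spec in Ha, Hb.
        unfold cor3 in E. injection E as E1 E2 E3.
        apply (cor_inj al a 0 b); try tauto. lia.
      * intros t Ht. apply in_map_iff in Ht. destruct Ht as [s [<- Hs]]. apply filter_In in Hs.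
        destruct Hs as [_ Hn]. unfold near in Hn. rewrite !Bool.andb_true_iff, !Nat.leb_le in Hn.
        unfold cor3, grid. apply in_flat_map. exists (cor p1 s). split. apply in_seq; lia.
        apply in_flat_map. exists (cor p2 s). split. apply in_seq; lia.
        apply in_map_iff. exists (cor p3 s). split. reflexivity. apply in_seq; lia.
    + intros s Hs [q [Uq Hq]]. apply filter_In. split. exact Hs.
      assert (Hl : length s = k) by (apply strs_spec in Hs; tauto).
      assert (Hl0 : length s0 = k) by (apply strs_spec in Hs0; tauto).
      destruct q as [[x y] z], q0 as [[x0 y0] z0].
      pose proof (HU _ _ Uq Uq0) as Hd. unfold inQ, cubeI in Hq, Hq0. rewrite Hl in Hq. rewrite Hl0 in Hq0.
      destruct (near_coord k x x0 (cor p1 s) (cor p1 s0)) as [A1 A2]; try tauto.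
      eapply Rle_trans; [apply dist_x|exact Hd].
      destruct (near_coord k y y0 (cor p2 s) (cor p2 s0)) as [B1 B2]; try tauto.
      eapply Rle_trans; [apply dist_y|exact Hd].
      destruct (near_coord k z z0 (cor p3 s) (cor p3 s0)) as [C1 C2]; try tauto.
      eapply Rle_trans; [apply dist_z|exact Hd].
      unfold near. rewrite !Bool.andb_true_iff, !Nat.leb_le. tauto.
  - exists []. split. simpl; lia. intros s Hs Hq. exfalso. apply Hno. exists s. tauto.
Qed.

Lemma sumc_const c n : sumc (fun _ => c) n = (c * n)%nat.
Proof. induction n; simpl; lia. Qed.

Lemma lower_count al k n (U : nat -> pt -> Prop) :
  (forall i, (i < n)%nat -> diam_le (U i) (/ 5 ^ k)) ->
  (forall p, Kalpha al p -> exists i, (i < n)%nat /\ U i p) ->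
  (Nm al 0 k <= 343 * n)%nat.
Proof.
  intros HU Hc. rewrite <- strs_len, <- sumc_const.
  apply (count_cover _ n _ (fun i s => exists q, U i q /\ inQ s q)).
  - apply strs_nodup.
  - intros s Hs. pose proof Hs as Hs'. apply strs_spec in Hs'. destruct Hs' as [Hv Hl].
    pose proof (ext_vpath al s Hv) as He.
    destruct (Hc _ (pi_K al _ He)) as [i [Hi Ui]]. exists i. split. exact Hi.
    exists (pi (ext al s)). split. exact Ui.
    pose proof (pi_inQ al _ k He) as H. rewrite pre_ext in H by lia.
    rewrite firstn_all2 in H by lia. exact H.
  - intros i Hi. destruct (box_count al k (U i) (HU i Hi)) as [B [HB1 HB2]]. exists B. split; auto.
Qed.

Definition NN (al : nat -> bool) (k : nat) : R := INR (Nm al 0 k).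

Lemma NN_ge1 al k : 1 <= NN al k.
Proof. unfold NN. apply (le_INR 1). apply Nm_pos. Qed.

Lemma covnum_finite al k j delta : (1 <= j)%nat -> 0 < delta <= / 5 ^ k -> 2 / 5 ^ j <= delta ->
  exists c, covnum delta (Kalpha al) = Finite c /\ NN al k / 343 <= c <= NN al j.
Proof.
  intros Hj Hd Hj2. unfold covnum.
  destruct (Glb_Rbar_correct (fun x => exists n : nat, x = INR n /\
     exists U : nat -> pt -> Prop,
       (forall i, (i < n)%nat -> diam_le (U i) delta) /\
       (forall p, Kalpha al p -> exists i, (i < n)%nat /\ U i p))) as [Hlb Hglb].
  set (g := Glb_Rbar _) in *.
  assert (H1 : Rbar_le g (NN al j)).
  { apply Hlb. exists (Nm al 0 j). split. reflexivity.
    exists (fun i => inQ (nth i (strs al 0 j) [])). split.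
    - intros i Hi. intros P Q HP HQ. eapply Rle_trans. apply (inQ_diam _ P Q HP HQ).
      rewrite <- strs_len in Hi. assert (Hn := nth_In _ [] Hi). apply strs_spec in Hn.
      destruct Hn as [_ ->]. exact Hj2.
    - intros p Hp. apply K_char with (k := j) in Hp; [|exact Hj]. destruct Hp as [s [Hs Hq]].
      destruct (In_nth _ _ [] Hs) as [i [Hi Ei]]. exists i. rewrite strs_len in Hi. split. exact Hi.
      rewrite Ei. exact Hq. }
  assert (H2 : Rbar_le (NN al k / 343) g).
  { apply Hglb. intros x [n [-> [U [HU Hc]]]].
    assert (Hn : (Nm al 0 k <= 343 * n)%nat).
    { apply (lower_count al k n U); auto. intros i Hi P Q HP HQ. eapply Rle_trans. apply (HU i Hi P Q HP HQ). lra. }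
    apply le_INR in Hn. rewrite mult_INR in Hn. simpl. unfold NN. simpl (INR 343) in Hn.
    replace (INR 343) with 343 in Hn by (simpl; lra). lra. }
  destruct g as [c| |]; simpl in H1, H2; try contradiction.
  exists c. split. reflexivity. lra.
Qed.

Lemma nzeros_le al k : (nzeros al k <= k)%nat.
Proof. induction k; simpl. lia. destruct (al k); lia. Qed.

Lemma Nm_formula al k : Nm al 0 k = (13 ^ nzeros al k * 44 ^ (k - nzeros al k))%nat.
Proof.
  induction k as [|k IH]. reflexivity.
  rewrite Nm_S, IH. simpl (0 + k)%nat. simpl nzeros. pose proof (nzeros_le al k).
  destruct (al k).
  - rewrite digs_len1, Nat.add_0_r. replace (S k - nzeros al k)%nat with (S (k - nzeros al k)) by lia.
    simpl. ring.
  - rewrite digs_len0. replace (S k - (nzeros al k + 1))%nat with (k - nzeros al k)%nat by lia.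
    rewrite Nat.pow_add_r. simpl. ring.
Qed.

Lemma ln5_pos : 0 < ln 5.
Proof. rewrite <- ln_1. apply ln_increasing; lra. Qed.

Lemma ln_NN al k : ln (NN al k) = INR (nzeros al k) * ln 13 + (INR k - INR (nzeros al k)) * ln 44.
Proof.
  unfold NN. rewrite Nm_formula, mult_INR, !pow_INR. pose proof (nzeros_le al k).
  replace (INR 13) with 13 by (simpl; lra). replace (INR 44) with 44 by (simpl; lra).
  rewrite ln_mult by (apply pow_lt; lra). rewrite !ln_pow by lra. rewrite minus_INR by lia. reflexivity.
Qed.

Definition phi (al : nat -> bool) (k : nat) : R := ln (NN al k) / (INR k * ln 5).

Lemma phi_eq al k : (1 <= k)%nat -> phi al k = lambda_m al k * log5 13 + (1 - lambda_m al k) * log5 44.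
Proof.
  intros Hk. unfold phi, lambda_m, log5. rewrite ln_NN.
  assert (0 < INR k) by (apply lt_0_INR; lia). pose proof ln5_pos.
  field. lra.
Qed.

Lemma lambda_bounds al k : 0 <= lambda_m al k <= 1.
Proof.
  unfold lambda_m. pose proof (nzeros_le al k). destruct k.
  - simpl. unfold Rdiv. rewrite Rinv_0. lra.
  - assert (0 < INR (S k)) by (apply lt_0_INR; lia). split.
    apply Rdiv_le_0_compat; auto. apply pos_INR.
    apply (Rmult_le_reg_r (INR (S k))); auto. unfold Rdiv. rewrite Rmult_assoc, Rinv_l by lra.
    apply le_INR in H. lra.
Qed.

Lemma log5_bounds : 0 < log5 13 < log5 44.
Proof.
  unfold log5. pose proof ln5_pos. split.
  apply Rdiv_lt_0_compat; auto. rewrite <- ln_1. apply ln_increasing; lra.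
  apply Rmult_lt_compat_r. apply Rinv_0_lt_compat; auto. apply ln_increasing; lra.
Qed.

Lemma phi_bounds al k : (1 <= k)%nat -> 0 <= phi al k <= log5 44.
Proof.
  intros Hk. rewrite phi_eq by auto. pose proof (lambda_bounds al k). pose proof log5_bounds. nra.
Qed.

Definition Cb : R := log5 44 + (ln 343 + 2 * ln 44) / ln 5.

Lemma div_bound num W D Lk : 0 < Lk <= D -> Rabs num <= W -> Rabs (num / D) <= W / Lk.
Proof.
  intros [HL HD] Hn. unfold Rdiv. rewrite Rabs_mult, Rabs_inv, (Rabs_pos_eq D) by lra.
  assert (0 <= W) by (pose proof (Rabs_pos num); lra).
  apply Rmult_le_compat; auto. apply Rabs_pos. left; apply Rinv_0_lt_compat; lra.
  apply Rinv_le_contravar; lra.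
Qed.

Lemma Nm_plus2 al k : (Nm al 0 (k + 2) <= 44 * 44 * Nm al 0 k)%nat.
Proof.
  rewrite Nm_add. simpl Nm. replace (0 + k)%nat with k by lia. pose proof (digs_len (al k)). pose proof (digs_len (al (S k))). pose proof (Nm_pos al k 0). rewrite Nat.mul_1_r. assert (length (digs (al k)) * length (digs (al (S k))) <= 44 * 44)%nat by (apply Nat.mul_le_mono; lia). nia.
Qed.

Lemma box_est al k delta : (1 <= k)%nat -> / 5 ^ (k + 1) < delta <= / 5 ^ k ->
  exists beta, box_ratio (Kalpha al) delta = Finite beta /\ Rabs (beta - phi al k) <= Cb / INR k.
Proof.
  intros Hk [Hd1 Hd2]. pose proof (pow5_pos (k + 1)). pose proof (pow5_pos k).
  assert (Hdp : 0 < delta) by (apply Rlt_trans with (/ 5 ^ (k + 1)); auto; apply Rinv_0_lt_compat; lra).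
  destruct (covnum_finite al k (k + 2) delta ltac:(lia)) as [c [Hc [Hc1 Hc2]]]. split; auto.
  { apply Rle_trans with (/ 5 ^ (k + 1)); [|lra].
    replace (5 ^ (k + 2)) with (5 ^ (k + 1) * 5) by (rewrite !pow_add; simpl; ring).
    unfold Rdiv. rewrite Rinv_mult. apply Rmult_le_reg_l with (5 ^ (k + 1)); auto.
    rewrite Rinv_r by lra. field_simplify; lra. }
  unfold box_ratio. rewrite Hc. eexists. split. reflexivity.
  pose proof (NN_ge1 al k) as HN.
  assert (HNk2 : NN al (k + 2) <= 44 * 44 * NN al k).
  { unfold NN. pose proof (Nm_plus2 al k) as HH. apply le_INR in HH. rewrite !mult_INR in HH.
    replace (INR 44) with 44 in HH by (simpl; lra). exact HH. }
  assert (Hcp : 0 < c) by lra.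
  set (E := ln 343 + 2 * ln 44).
  assert (Hl343 : 0 < ln 343) by (rewrite <- ln_1; apply ln_increasing; lra).
  assert (Hl44 : 0 < ln 44) by (rewrite <- ln_1; apply ln_increasing; lra).
  assert (Hlc1 : ln (NN al k) - ln 343 <= ln c).
  { replace (ln (NN al k) - ln 343) with (ln (NN al k / 343)).
    apply ln_le; [apply Rdiv_lt_0_compat; lra | lra].
    unfold Rdiv. rewrite ln_mult by (try apply Rinv_0_lt_compat; lra). rewrite ln_Rinv by lra. ring. }
  assert (Hlc2 : ln c <= ln (NN al k) + 2 * ln 44).
  { apply Rle_trans with (ln (44 * 44 * NN al k)). apply ln_le; lra.
    rewrite !ln_mult; lra. }
  pose proof ln5_pos as H5.
  assert (HkR : 0 < INR k) by (apply lt_0_INR; lia).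
  set (Lk := INR k * ln 5).
  assert (HLk : 0 < Lk) by (unfold Lk; nra).
  assert (HD1 : Lk <= - ln delta).
  { unfold Lk. assert (ln delta <= ln (/ 5 ^ k)) by (apply ln_le; auto).
    rewrite ln_Rinv in H1 by lra. rewrite ln_pow in H1 by lra. lra. }
  assert (HD2 : - ln delta <= Lk + ln 5).
  { assert (ln (/ 5 ^ (k + 1)) < ln delta) by (apply ln_increasing; auto; apply Rinv_0_lt_compat; lra).
    rewrite ln_Rinv, ln_pow, plus_INR in H1 by lra. unfold Lk. simpl in H1. lra. }
  assert (HNphi : ln (NN al k) = phi al k * Lk) by (unfold phi, Lk; field; lra).
  pose proof (phi_bounds al k Hk) as [Hp1 Hp2].
  replace (ln c / - ln delta - phi al k) with ((ln c - phi al k * - ln delta) / - ln delta)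
    by (field; lra).
  replace (Cb / INR k) with ((E + log5 44 * ln 5) / Lk) by (unfold Cb, E, Lk; field; lra).
  apply div_bound. lra.
  assert (0 <= phi al k * (- ln delta - Lk)) by (apply Rmult_le_pos; lra).
  assert (phi al k * (- ln delta - Lk) <= log5 44 * ln 5) by (apply Rmult_le_compat; lra).
  apply Rabs_le. unfold E. split; lra.
Qed.

Lemma nat_large x : exists K, forall k, (K <= k)%nat -> x < INR k.
Proof.
  destruct (INR_unbounded x) as [K HK]. exists K. intros k Hk. apply le_INR in Hk. lra.
Qed.

Lemma pow5_ge k : INR k + 1 <= 5 ^ k.
Proof.
  induction k as [|k IH]. simpl; lra. rewrite S_INR. simpl. pose proof (pos_INR k). lra.
Qed.

Lemma inv_pow5_small eps : 0 < eps -> exists K, forall k, (K <= k)%nat -> / 5 ^ k < eps.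
Proof.
  intros He. destruct (nat_large (/ eps)) as [K HK]. exists K. intros k Hk.
  specialize (HK k Hk). pose proof (pow5_ge k). pose proof (pow5_pos k).
  rewrite <- (Rinv_inv eps). apply Rinv_lt_contravar. apply Rmult_lt_0_compat; auto. apply Rinv_0_lt_compat; auto.
  lra.
Qed.

Lemma inv_pow5_mono a b : (b <= a)%nat -> / 5 ^ a <= / 5 ^ b.
Proof.
  intros H. apply Rinv_le_contravar. apply pow5_pos. apply Rle_pow; auto. lra.
Qed.

Lemma level_exists delta : 0 < delta <= 1 -> exists k, / 5 ^ (k + 1) < delta <= / 5 ^ k.
Proof.
  intros Hd. destruct (inv_pow5_small delta (proj1 Hd)) as [K HK].
  assert (Hgen : forall n, / 5 ^ n < delta -> exists k, / 5 ^ (k + 1) < delta <= / 5 ^ k).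
  { induction n as [|n IH]; intros Hn.
    - simpl in Hn. rewrite Rinv_1 in Hn. lra.
    - destruct (Rle_or_lt delta (/ 5 ^ n)) as [H|H].
      + exists n. replace (n + 1)%nat with (S n) by lia. split; auto.
      + apply IH; auto. }
  apply (Hgen K). apply HK. lia.
Qed.

Lemma rbar_le_eps x V : (forall eps, 0 < eps -> Rbar_le x (Finite (V + eps))) -> Rbar_le x (Finite V).
Proof.
  intros H. destruct x as [x| |]; simpl in *.
  - destruct (Rle_or_lt x V) as [h|h]; auto. specialize (H ((x - V) / 2) ltac:(lra)). lra.
  - apply (H 1). lra.
  - auto.
Qed.

Lemma rbar_ge_eps x V : (forall eps, 0 < eps -> Rbar_le (Finite (V - eps)) x) -> Rbar_le (Finite V) x.
Proof.
  intros H. destruct x as [x| |]; simpl in *.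
  - destruct (Rle_or_lt V x) as [h|h]; auto. specialize (H ((V - x) / 2) ltac:(lra)). lra.
  - auto.
  - apply (H 1). lra.
Qed.

Lemma Cb_pos : 0 <= Cb.
Proof.
  unfold Cb. pose proof log5_bounds. pose proof ln5_pos.
  assert (0 < ln 343) by (rewrite <- ln_1; apply ln_increasing; lra).
  assert (0 < ln 44) by (rewrite <- ln_1; apply ln_increasing; lra).
  assert (0 <= (ln 343 + 2 * ln 44) / ln 5) by (apply Rdiv_le_0_compat; lra). lra.
Qed.

Lemma Cb_small eps : 0 < eps -> exists K, forall k, (K <= k)%nat -> (1 <= k)%nat -> Cb / INR k < eps.
Proof.
  intros He. destruct (nat_large (Cb / eps)) as [K HK]. exists K. intros k Hk Hk1.
  specialize (HK k Hk). assert (0 < INR k) by (apply lt_0_INR; lia). pose proof Cb_pos.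
  apply (Rmult_lt_reg_r (INR k)); auto. unfold Rdiv. rewrite Rmult_assoc, Rinv_l by lra.
  apply (Rmult_lt_compat_l eps) in HK; auto. unfold Rdiv in HK.
  rewrite Rmult_comm, Rmult_assoc, Rinv_l, Rmult_1_r in HK by lra. lra.
Qed.

Lemma glb_le (E : Rbar -> Prop) x : E x -> Rbar_le (Rbar_glb E) x.
Proof. intros H. unfold Rbar_glb. destruct (Rbar_ex_glb E) as [g [Hl Hg]]. simpl. apply Hl; auto. Qed.
Lemma glb_ge (E : Rbar -> Prop) l : (forall x, E x -> Rbar_le l x) -> Rbar_le l (Rbar_glb E).
Proof. intros H. unfold Rbar_glb. destruct (Rbar_ex_glb E) as [g [Hl Hg]]. simpl. apply Hg; auto. Qed.
Lemma lub_ge (E : Rbar -> Prop) x : E x -> Rbar_le x (Rbar_lub E).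
Proof. intros H. unfold Rbar_lub. destruct (Rbar_ex_lub E) as [g [Hl Hg]]. simpl. apply Hl; auto. Qed.
Lemma lub_le (E : Rbar -> Prop) l : (forall x, E x -> Rbar_le x l) -> Rbar_le (Rbar_lub E) l.
Proof. intros H. unfold Rbar_lub. destruct (Rbar_ex_lub E) as [g [Hl Hg]]. simpl. apply Hg; auto. Qed.

Definition BR al delta := box_ratio (Kalpha al) delta.

Lemma lower_box_val al V :
  (forall e, 0 < e -> exists K, forall k, (K <= k)%nat -> V - e < phi al k) ->
  (forall e, 0 < e -> forall K, exists k, (K <= k)%nat /\ phi al k < V + e) ->
  lower_box_dim (Kalpha al) = Finite V.
Proof.
  intros H1 H2.
  set (G := fun eps => Rbar_glb (fun w => exists delta, 0 < delta < eps /\ w = box_ratio (Kalpha al) delta)).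
  assert (Ha : forall eps, 0 < eps -> Rbar_le (G eps) (Finite V)).
  { intros eps Heps. apply rbar_le_eps. intros e He.
    destruct (Cb_small (e / 2) ltac:(lra)) as [K1 HK1].
    destruct (inv_pow5_small eps Heps) as [K2 HK2].
    destruct (H2 (e / 2) ltac:(lra) (K1 + K2 + 1)%nat) as [k [Hk Hphi]].
    destruct (box_est al k (/ 5 ^ k) ltac:(lia)) as [beta [Hb Hbeta]].
    { split; [|lra]. apply Rinv_lt_contravar. apply Rmult_lt_0_compat; apply pow5_pos.
      rewrite pow_add. pose proof (pow5_pos k). simpl. lra. }
    unfold G. apply Rbar_le_trans with (Finite beta).
    - apply glb_le. exists (/ 5 ^ k). split. split. apply Rinv_0_lt_compat, pow5_pos. apply HK2; lia.
      symmetry; exact Hb.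
    - simpl. specialize (HK1 k ltac:(lia) ltac:(lia)). apply Rabs_le_between in Hbeta. lra. }
  assert (Hb : forall e, 0 < e -> exists eps, 0 < eps /\ Rbar_le (Finite (V - e)) (G eps)).
  { intros e He. destruct (H1 (e / 2) ltac:(lra)) as [K0 HK0].
    destruct (Cb_small (e / 2) ltac:(lra)) as [K1 HK1].
    set (K := (K0 + K1 + 1)%nat).
    exists (/ 5 ^ K). split. apply Rinv_0_lt_compat, pow5_pos.
    unfold G. apply glb_ge.
    intros w [delta [[Hd1 Hd2] ->]].
    assert (delta <= 1). { pose proof (inv_pow5_mono K 0 ltac:(lia)) as Hm. simpl in Hm. rewrite Rinv_1 in Hm. lra. }
    destruct (level_exists delta ltac:(lra)) as [k [Hk1 Hk2]].
    assert (HkK : (K <= k)%nat).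
    { destruct (Compare_dec.le_lt_dec K k) as [h|h]; auto. pose proof (inv_pow5_mono K (k + 1) ltac:(lia)). lra. }
    destruct (box_est al k delta ltac:(lia) (conj Hk1 Hk2)) as [beta [Hbr Hbeta]].
    rewrite Hbr. simpl. specialize (HK1 k ltac:(lia) ltac:(lia)). specialize (HK0 k ltac:(lia)).
    apply Rabs_le_between in Hbeta. lra. }
  unfold lower_box_dim. apply Rbar_is_lub_unique. split.
  - intros x [eps [Heps ->]]. apply Ha; auto.
  - intros b Hub. apply rbar_ge_eps. intros e He. destruct (Hb e He) as [eps [Heps Hle]].
    apply Rbar_le_trans with (G eps); auto. apply Hub. exists eps. split; auto.
Qed.

Lemma upper_box_val al W :
  (forall e, 0 < e -> exists K, forall k, (K <= k)%nat -> phi al k < W + e) ->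
  (forall e, 0 < e -> forall K, exists k, (K <= k)%nat /\ W - e < phi al k) ->
  upper_box_dim (Kalpha al) = Finite W.
Proof.
  intros H1 H2.
  set (G := fun eps => Rbar_lub (fun w => exists delta, 0 < delta < eps /\ w = box_ratio (Kalpha al) delta)).
  assert (Ha : forall eps, 0 < eps -> Rbar_le (Finite W) (G eps)).
  { intros eps Heps. apply rbar_ge_eps. intros e He.
    destruct (Cb_small (e / 2) ltac:(lra)) as [K1 HK1].
    destruct (inv_pow5_small eps Heps) as [K2 HK2].
    destruct (H2 (e / 2) ltac:(lra) (K1 + K2 + 1)%nat) as [k [Hk Hphi]].
    destruct (box_est al k (/ 5 ^ k) ltac:(lia)) as [beta [Hb Hbeta]].
    { split; [|lra]. apply Rinv_lt_contravar. apply Rmult_lt_0_compat; apply pow5_pos.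
      rewrite pow_add. pose proof (pow5_pos k). simpl. lra. }
    unfold G. apply Rbar_le_trans with (Finite beta).
    - simpl. specialize (HK1 k ltac:(lia) ltac:(lia)). apply Rabs_le_between in Hbeta. lra.
    - apply lub_ge. exists (/ 5 ^ k). split. split. apply Rinv_0_lt_compat, pow5_pos. apply HK2; lia.
      symmetry; exact Hb. }
  assert (Hb : forall e, 0 < e -> exists eps, 0 < eps /\ Rbar_le (G eps) (Finite (W + e))).
  { intros e He. destruct (H1 (e / 2) ltac:(lra)) as [K0 HK0].
    destruct (Cb_small (e / 2) ltac:(lra)) as [K1 HK1].
    set (K := (K0 + K1 + 1)%nat).
    exists (/ 5 ^ K). split. apply Rinv_0_lt_compat, pow5_pos.
    unfold G. apply lub_le.
    intros w [delta [[Hd1 Hd2] ->]].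
    assert (delta <= 1). { pose proof (inv_pow5_mono K 0 ltac:(lia)) as Hm. simpl in Hm. rewrite Rinv_1 in Hm. lra. }
    destruct (level_exists delta ltac:(lra)) as [k [Hk1 Hk2]].
    assert (HkK : (K <= k)%nat).
    { destruct (Compare_dec.le_lt_dec K k) as [h|h]; auto. pose proof (inv_pow5_mono K (k + 1) ltac:(lia)). lra. }
    destruct (box_est al k delta ltac:(lia) (conj Hk1 Hk2)) as [beta [Hbr Hbeta]].
    rewrite Hbr. simpl. specialize (HK1 k ltac:(lia) ltac:(lia)). specialize (HK0 k ltac:(lia)).
    apply Rabs_le_between in Hbeta. lra. }
  unfold upper_box_dim. apply Rbar_is_glb_unique. split.
  - intros x [eps [Heps ->]]. apply Ha; auto.
  - intros b Hlb. apply rbar_le_eps. intros e He. destruct (Hb e He) as [eps [Heps Hle]].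
    apply Rbar_le_trans with (G eps); auto. apply Hlb. exists eps. split; auto.
Qed.

Lemma limsup_fin al : exists L, lambda_sup al = Finite L /\ is_LimSup_seq (lambda_m al) L.
Proof.
  unfold lambda_sup, LimSup_seq. destruct (ex_LimSup_seq (lambda_m al)) as [l Hl]. simpl.
  destruct l as [L| |].
  - exists L. auto.
  - exfalso. destruct (Hl 1 0%nat) as [n [_ Hn]]. pose proof (lambda_bounds al n). lra.
  - exfalso. destruct (Hl 0) as [N HN]. specialize (HN N (le_n _)). pose proof (lambda_bounds al N). lra.
Qed.

Lemma liminf_fin al : exists L, lambda_inf al = Finite L /\ is_LimInf_seq (lambda_m al) L.
Proof.
  unfold lambda_inf, LimInf_seq. destruct (ex_LimInf_seq (lambda_m al)) as [l Hl]. simpl.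
  destruct l as [L| |].
  - exists L. auto.
  - exfalso. destruct (Hl 1) as [N HN]. specialize (HN N (le_n _)). pose proof (lambda_bounds al N). lra.
  - exfalso. destruct (Hl 0 0%nat) as [n [_ Hn]]. pose proof (lambda_bounds al n). lra.
Qed.

Lemma phi_lin al k : (1 <= k)%nat -> phi al k = log5 44 - lambda_m al k * (log5 44 - log5 13).
Proof. intros Hk. rewrite phi_eq by auto. ring. Qed.

Lemma sup_props al (L : R) : is_LimSup_seq (lambda_m al) L ->
  (forall e, 0 < e -> exists K, forall k, (K <= k)%nat -> L * log5 13 + (1 - L) * log5 44 - e < phi al k) /\
  (forall e, 0 < e -> forall K, exists k, (K <= k)%nat /\ phi al k < L * log5 13 + (1 - L) * log5 44 + e).
Proof.
  intros HL. red in HL. pose proof log5_bounds as [Ha Hab]. set (g := log5 44 - log5 13).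
  assert (Hg : 0 < g) by (unfold g; lra). split.
  - intros e He. assert (Hp : 0 < e / g) by (apply Rdiv_lt_0_compat; auto).
    destruct (HL (mkposreal _ Hp)) as [_ [N HN]]. exists (N + 1)%nat. intros k Hk.
    specialize (HN k ltac:(lia)). simpl in HN. rewrite phi_lin by lia. fold g.
    apply (Rmult_lt_compat_r g) in HN; auto. unfold Rdiv in HN. rewrite Rmult_plus_distr_r, Rmult_assoc, Rinv_l in HN by lra.
    unfold g in *. lra.
  - intros e He K. assert (Hp : 0 < e / g) by (apply Rdiv_lt_0_compat; auto).
    destruct (HL (mkposreal _ Hp)) as [HN _]. destruct (HN (K + 1)%nat) as [k [Hk Hl]].
    exists k. split. lia. simpl in Hl. rewrite phi_lin by lia. fold g.
    apply (Rmult_lt_compat_r g) in Hl; auto. unfold Rdiv in Hl. rewrite Rmult_minus_distr_r, Rmult_assoc, Rinv_l in Hl by lra.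
    unfold g in *. lra.
Qed.

Lemma inf_props al (L : R) : is_LimInf_seq (lambda_m al) L ->
  (forall e, 0 < e -> exists K, forall k, (K <= k)%nat -> phi al k < L * log5 13 + (1 - L) * log5 44 + e) /\
  (forall e, 0 < e -> forall K, exists k, (K <= k)%nat /\ L * log5 13 + (1 - L) * log5 44 - e < phi al k).
Proof.
  intros HL. red in HL. pose proof log5_bounds as [Ha Hab]. set (g := log5 44 - log5 13).
  assert (Hg : 0 < g) by (unfold g; lra). split.
  - intros e He. assert (Hp : 0 < e / g) by (apply Rdiv_lt_0_compat; auto).
    destruct (HL (mkposreal _ Hp)) as [_ [N HN]]. exists (N + 1)%nat. intros k Hk.
    specialize (HN k ltac:(lia)). simpl in HN. rewrite phi_lin by lia. fold g.
    apply (Rmult_lt_compat_r g) in HN; auto. unfold Rdiv in HN. rewrite Rmult_minus_distr_r, Rmult_assoc, Rinv_l in HN by lra.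
    unfold g in *. lra.
  - intros e He K. assert (Hp : 0 < e / g) by (apply Rdiv_lt_0_compat; auto).
    destruct (HL (mkposreal _ Hp)) as [HN _]. destruct (HN (K + 1)%nat) as [k [Hk Hl]].
    exists k. split. lia. simpl in Hl. rewrite phi_lin by lia. fold g.
    apply (Rmult_lt_compat_r g) in Hl; auto. unfold Rdiv in Hl. rewrite Rmult_plus_distr_r, Rmult_assoc, Rinv_l in Hl by lra.
    unfold g in *. lra.
Qed.

Lemma thm_lower al : lower_box_dim (Kalpha al) =
  Finite (real (lambda_sup al) * log5 13 + (1 - real (lambda_sup al)) * log5 44).
Proof.
  destruct (limsup_fin al) as [L [-> HL]]. simpl. destruct (sup_props al L HL) as [A B].
  apply lower_box_val; auto.
Qed.

Lemma thm_upper al : upper_box_dim (Kalpha al) =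
  Finite (real (lambda_inf al) * log5 13 + (1 - real (lambda_inf al)) * log5 44).
Proof.
  destruct (liminf_fin al) as [L [-> HL]]. simpl. destruct (inf_props al L HL) as [A B].
  apply upper_box_val; auto.
Qed.

Lemma series_nonneg (a : nat -> R) v : (forall i, 0 <= a i) -> is_series a v -> 0 <= v.
Proof.
  intros Ha Hs. assert (H : is_lim_seq (sum_n a) v) by exact Hs.
  assert (Rbar_le 0 v). { apply (is_lim_seq_le (fun _ => 0) (sum_n a)). intros n. rewrite sum_n_Reals. apply cond_pos_sum; auto.
    apply is_lim_seq_const. exact H. }
  exact H0.
Qed.

Lemma sum_f_R0_mono (a : nat -> R) n m : (forall i, 0 <= a i) -> (n <= m)%nat -> sum_f_R0 a n <= sum_f_R0 a m.
Proof.
  intros Ha H. induction H. lra. simpl. specialize (Ha (S m)). lra.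
Qed.

Lemma series_partial (a : nat -> R) v n : (forall i, 0 <= a i) -> is_series a v -> sum_f_R0 a n <= v.
Proof.
  intros Ha Hs. assert (H : is_lim_seq (sum_n a) v) by exact Hs.
  assert (Rbar_le (sum_f_R0 a n) v). { apply (is_lim_seq_le_loc (fun _ => sum_f_R0 a n) (sum_n a)).
    exists n. intros m Hm. rewrite sum_n_Reals. apply sum_f_R0_mono; auto.
    apply is_lim_seq_const. exact H. }
  exact H0.
Qed.

Lemma finite_series (A : R) n : is_series (fun i => if Nat.ltb i n then A else 0) (INR n * A).
Proof.
  set (f := fun i => if Nat.ltb i n then A else 0).
  assert (Hs : forall m, sum_f_R0 f m = INR (Nat.min (S m) n) * A).
  { induction m as [|m IH].
    - unfold f. destruct n as [|n]; simpl. lra. lra.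
    - replace (sum_f_R0 f (S m)) with (sum_f_R0 f m + f (S m)) by reflexivity. rewrite IH. unfold f.
      destruct (Nat.ltb_spec (S m) n).
      + rewrite (Nat.min_l (S m) n) by lia. rewrite (Nat.min_l (S (S m)) n) by lia. rewrite (S_INR (S m)). lra.
      + rewrite (Nat.min_r (S (S m)) n) by lia.
        rewrite Nat.min_r by lia. lra. }
  cut (is_lim_seq (sum_n f) (INR n * A)). intro H; exact H.
  apply (is_lim_seq_ext_loc (fun _ => INR n * A)).
  exists n. intros m Hm. rewrite sum_n_Reals. rewrite Hs. rewrite Nat.min_r by lia. reflexivity.
  apply is_lim_seq_const.
Qed.

Lemma geom_series eta : is_series (fun i => eta * (/ 2) ^ i) (2 * eta).
Proof.
  assert (H := is_series_geom (/ 2) ltac:(rewrite Rabs_pos_eq; lra)).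
  apply (is_series_scal_r eta) in H.
  replace (2 * eta) with (/ (1 - / 2) * eta) by field.
  apply (is_series_ext _ _ _ (fun i => Rmult_comm _ _)) in H. exact H.
Qed.

Lemma Rpower_pos x y : 0 < Rpower x y.
Proof. unfold Rpower. apply exp_pos. Qed.

Lemma Rpower_inv_s t s : 0 < t -> 0 < s -> Rpower (Rpower t (/ s)) s = t.
Proof.
  intros Ht Hs. rewrite Rpower_mult. rewrite Rinv_l by lra. apply Rpower_1; auto.
Qed.

Lemma Rpower_s_inv t s : 0 < t -> 0 < s -> Rpower (Rpower t s) (/ s) = t.
Proof.
  intros Ht Hs. rewrite Rpower_mult. rewrite Rinv_r by lra. apply Rpower_1; auto.
Qed.

Lemma Rpower_mono_base a b c : 0 <= c -> 0 < a <= b -> Rpower a c <= Rpower b c.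
Proof. apply Rle_Rpower_l. Qed.

Lemma exp_le x y : x <= y -> exp x <= exp y.
Proof. intros [H|H]. left; apply exp_increasing; auto. subst; lra. Qed.

Lemma half_pow_le1 i : (/ 2) ^ i <= 1.
Proof. induction i; simpl. lra. assert (0 <= (/2) ^ i) by (apply pow_le; lra). lra. Qed.

Lemma Rpower_half_s s : 1 <= s -> Rpower (/ 2) s <= / 2.
Proof.
  intros Hs. unfold Rpower. rewrite <- (exp_ln (/ 2)) at 2 by lra.
  apply exp_le. rewrite ln_Rinv by lra. assert (0 < ln 2) by (rewrite <- ln_1; apply ln_increasing; lra). nra.
Qed.

Lemma hd_small al V s delta eps : 0 < delta -> 0 < eps -> 0 <= V < s -> 1 <= s ->
  (forall e, 0 < e -> forall K, exists k, (K <= k)%nat /\ phi al k < V + e) ->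
  exists (U : nat -> pt -> Prop) (r : nat -> R) v,
    (forall i, 0 < r i <= delta) /\ (forall i, diam_le (U i) (r i)) /\
    (forall p, Kalpha al p -> exists i, U i p) /\
    is_series (fun i => Rpower (r i) s) v /\ v <= eps.
Proof.
  intros Hd He [HV Hs] Hs1 H2.
  set (t := (s - V) / 2). assert (Ht : 0 < t) by (unfold t; lra).
  pose proof ln5_pos as H5.
  assert (Hl2 : 0 < ln 2) by (rewrite <- ln_1; apply ln_increasing; lra).
  destruct (inv_pow5_small (delta / 4) ltac:(lra)) as [K1 HK1].
  destruct (nat_large ((s * ln 2 - ln (eps / 2)) / (t * ln 5))) as [K2 HK2].
  destruct (H2 t Ht (K1 + K2 + 1)%nat) as [k [Hk Hphi]].
  specialize (HK1 k ltac:(lia)). specialize (HK2 k ltac:(lia)).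
  set (n := Nm al 0 k). set (r0 := 2 / 5 ^ k). set (A := Rpower r0 s).
  set (Rd := Rpower delta s). set (eta := Rmin (eps / 4) (Rd / 2)).
  pose proof (pow5_pos k) as Hp5.
  assert (Hr0 : 0 < r0) by (unfold r0; apply Rdiv_lt_0_compat; lra).
  assert (Hr0d : r0 <= delta / 2) by (unfold r0; unfold Rdiv at 1; lra).
  assert (HA : 0 < A) by apply Rpower_pos.
  assert (HRd : 0 < Rd) by apply Rpower_pos.
  assert (Heta : 0 < eta) by (unfold eta; apply Rmin_glb_lt; lra).
  assert (HARd : A <= Rd / 2).
  { unfold A. eapply Rle_trans. apply (Rpower_mono_base r0 (delta * / 2) s); lra.
    rewrite <- Rpower_mult_distr by lra. pose proof (Rpower_half_s s Hs1). unfold Rd.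
    pose proof (Rpower_pos delta s). nra. }
  set (tt := fun i => (if Nat.ltb i n then A else 0) + eta * (/ 2) ^ i).
  assert (Htt : forall i, 0 < tt i).
  { intros i. unfold tt. assert (0 < eta * (/2) ^ i) by (apply Rmult_lt_0_compat; auto; apply pow_lt; lra).
    destruct (Nat.ltb i n); lra. }
  assert (HttRd : forall i, tt i <= Rd).
  { intros i. unfold tt. pose proof (half_pow_le1 i). assert (eta <= Rd / 2) by (unfold eta; apply Rmin_r).
    assert (eta * (/ 2) ^ i <= eta) by (pose proof (pow_le (/2) i ltac:(lra)); nra).
    destruct (Nat.ltb i n); lra. }
  set (r := fun i => Rpower (tt i) (/ s)).
  set (U := fun i => if Nat.ltb i n then inQ (nth i (strs al 0 k) []) else (fun _ : pt => False)).
  exists U, r, (INR n * A + 2 * eta). split; [|split; [|split; [|split]]].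
  - intros i. split. apply Rpower_pos. unfold r.
    rewrite <- (Rpower_s_inv delta s) by lra. apply Rpower_mono_base.
    left; apply Rinv_0_lt_compat; lra. split; [auto | apply HttRd].
  - intros i. unfold U. destruct (Nat.ltb_spec i n) as [Hi|Hi].
    + intros P Q HP HQ. eapply Rle_trans. apply (inQ_diam _ P Q HP HQ).
      assert (Hn : In (nth i (strs al 0 k) []) (strs al 0 k)) by (apply nth_In; rewrite strs_len; exact Hi).
      apply strs_spec in Hn. destruct Hn as [_ ->]. fold r0.
      unfold r. rewrite <- (Rpower_s_inv r0 s) by lra. fold A. apply Rpower_mono_base.
      left; apply Rinv_0_lt_compat; lra. split; auto. unfold tt. rewrite (proj2 (Nat.ltb_lt i n) Hi).
      assert (0 < eta * (/2) ^ i) by (apply Rmult_lt_0_compat; auto; apply pow_lt; lra). lra.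
    + intros P Q [].
  - intros p Hp. apply K_char with (k := k) in Hp; [|lia]. destruct Hp as [s' [Hs' Hq]].
    destruct (In_nth _ _ [] Hs') as [i [Hi Ei]]. rewrite strs_len in Hi. exists i.
    unfold U. rewrite (proj2 (Nat.ltb_lt i n) Hi). rewrite Ei. exact Hq.
  - apply (is_series_ext tt). intros i. unfold r. rewrite Rpower_inv_s; auto. lra.
    exact (is_series_plus _ _ _ _ (finite_series A n) (geom_series eta)).
  - assert (eta <= eps / 4) by (unfold eta; apply Rmin_l).
    assert (INR n * A <= eps / 2).
    { unfold n, A. fold (NN al k). rewrite <- (exp_ln (NN al k)) by (pose proof (NN_ge1 al k); lra).
      unfold Rpower. rewrite <- exp_plus. rewrite <- (exp_ln (eps / 2)) by lra. apply exp_le.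
      assert (Hk1 : (1 <= k)%nat) by lia. assert (HkR : 0 < INR k) by (apply lt_0_INR; lia).
      assert (HlnNN : ln (NN al k) = phi al k * (INR k * ln 5)) by (unfold phi; field; lra).
      assert (Hlr0 : ln r0 = ln 2 - INR k * ln 5).
      { unfold r0, Rdiv. rewrite ln_mult by (try apply Rinv_0_lt_compat; lra). rewrite ln_Rinv by lra.
        rewrite ln_pow by lra. ring. }
      rewrite HlnNN, Hlr0.
      assert (phi al k * (INR k * ln 5) <= (s - t) * (INR k * ln 5)).
      { apply Rmult_le_compat_r. nra. unfold t in *. lra. }
      assert (HK2' : s * ln 2 - ln (eps / 2) <= t * ln 5 * INR k).
      { apply Rlt_le. apply (Rmult_lt_compat_l (t * ln 5)) in HK2; [|nra].
        unfold Rdiv in HK2. rewrite Rmult_comm, Rmult_assoc, Rinv_l, Rmult_1_r in HK2 by nra. lra. }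
      nra. }
    lra.
Qed.

Lemma hd_zero al V s delta : 0 < delta -> 0 <= V < s -> 1 <= s ->
  (forall e, 0 < e -> forall K, exists k, (K <= k)%nat /\ phi al k < V + e) ->
  hausdorff_delta s delta (Kalpha al) = Finite 0.
Proof.
  intros Hd Hs Hs1 H2. unfold hausdorff_delta.
  match goal with |- Glb_Rbar ?E = _ => destruct (Glb_Rbar_correct E) as [Hlb Hglb]; set (g := Glb_Rbar E) in * end.
  assert (H0 : Rbar_le 0 g).
  { apply Hglb. intros x [U [r [Hr [_ [_ Hser]]]]]. simpl.
    apply (series_nonneg (fun i => Rpower (r i) s) x); auto. intros i. left; apply Rpower_pos. }
  assert (Heps : forall eps, 0 < eps -> Rbar_le g eps).
  { intros eps He. destruct (hd_small al V s delta eps Hd He Hs Hs1 H2) as [U [r [v [Hr [HU [Hc [Hser Hv]]]]]]].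
    apply Rbar_le_trans with (Finite v). apply Hlb. exists U, r. auto. simpl. exact Hv. }
  destruct g as [g| |]; simpl in H0.
  - f_equal. apply Rle_antisym; auto. destruct (Rle_or_lt g 0) as [h|h]; auto.
    specialize (Heps (g / 2) ltac:(lra)). simpl in Heps. lra.
  - specialize (Heps 1 ltac:(lra)). simpl in Heps. contradiction.
  - contradiction.
Qed.

Lemma hm_zero al V s : 0 <= V < s -> 1 <= s ->
  (forall e, 0 < e -> forall K, exists k, (K <= k)%nat /\ phi al k < V + e) ->
  hausdorff_measure s (Kalpha al) = Finite 0.
Proof.
  intros Hs Hs1 H2. unfold hausdorff_measure. apply Rbar_is_lub_unique. split.
  - intros x [delta [Hd ->]]. rewrite (hd_zero al V s delta Hd Hs Hs1 H2). simpl; lra.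
  - intros b Hb. specialize (Hb (hausdorff_delta s 1 (Kalpha al))). rewrite (hd_zero al V s 1 ltac:(lra) Hs Hs1 H2) in Hb.
    apply Hb. exists 1. split. lra. rewrite (hd_zero al V s 1 ltac:(lra) Hs Hs1 H2). reflexivity.
Qed.

Definition upd (e : nat -> trip) (L : nat) (d : trip) : nat -> trip :=
  fun j => if Nat.eqb j L then d else e j.

Fixpoint iterE (f : (nat -> trip) -> nat -> trip) (e0 : nat -> trip) (n : nat) : nat -> trip :=
  match n with
  | O => e0
  | S n' => upd (iterE f e0 n') n' (f (iterE f e0 n') n')
  end.

Lemma iterE_agree f e0 n : forall m j, (j < n)%nat -> (n <= m)%nat -> iterE f e0 m j = iterE f e0 n j.
Proof.
  intros m j Hj Hnm. induction Hnm. reflexivity.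
  simpl. unfold upd. destruct (Nat.eqb_spec j m). lia. exact IHHnm.
Qed.

Lemma fin_max (l : list trip) (Q : trip -> nat -> Prop) :
  (forall d M M', (M <= M')%nat -> Q d M -> Q d M') ->
  (forall d, In d l -> exists M, Q d M) -> exists M, forall d, In d l -> Q d M.
Proof.
  intros Hm. induction l as [|x l IH]; intros H.
  - exists O. intros d [].
  - destruct IH as [M1 HM1]. intros d Hd; apply H; simpl; auto.
    destruct (H x (or_introl eq_refl)) as [M2 HM2]. exists (M1 + M2)%nat.
    intros d [<-|Hd]. apply (Hm _ M2); auto; lia. apply (Hm _ M1); auto; lia.
Qed.

Lemma konig al (caught : nat -> (nat -> trip) -> Prop) (kf : nat -> nat) :
  (forall i e e', (forall j, (j < kf i)%nat -> e j = e' j) -> caught i e -> caught i e') ->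
  (forall e, vpath al e -> exists i, caught i e) ->
  exists M, forall e, vpath al e -> exists i, (i < M)%nat /\ caught i e.
Proof.
  intros Hpref Hcov. apply NNPP; intro Hno.
  set (good := fun e L => forall M, exists e', vpath al e' /\ (forall j, (j < L)%nat -> e' j = e j) /\
                                    forall i, (i < M)%nat -> ~ caught i e').
  assert (Hbad : forall e0, good e0 O).
  { intros e0 M. apply NNPP; intro H. apply Hno. exists M. intros e He. apply NNPP; intro H'. apply H.
    exists e. split; auto. split. intros; lia. intros i Hi Hc. apply H'. eauto. }
  assert (Hstep : forall e L, good e L -> exists d, good (upd e L d) (S L)).
  { intros e L Hg. apply NNPP; intro Hn.
    set (Q := fun d M => forall e', vpath al e' -> (forall j, (j < S L)%nat -> e' j = upd e L d j) ->
                           exists i, (i < M)%nat /\ caught i e').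
    assert (HQ : forall d, In d (digs (al L)) -> exists M, Q d M).
    { intros d _. apply NNPP; intro H1. apply Hn. exists d. intro M. apply NNPP; intro H2. apply H1. exists M.
      intros e' He' Hag. apply NNPP; intro H3. apply H2. exists e'. split; auto. split; auto.
      intros i Hi Hc. apply H3; eauto. }
    destruct (fin_max (digs (al L)) Q) as [M HM].
    { intros d M M' HMM HQd e' He' Hag. destruct (HQd e' He' Hag) as [i [Hi Hc]]. exists i. split; auto; lia. }
    exact HQ.
    destruct (Hg M) as [e' [He' [Hag Hnc]]].
    destruct (HM (e' L) (He' L) e' He') as [i [Hi Hc]].
    { intros j Hj. unfold upd. destruct (Nat.eqb_spec j L). subst; reflexivity. apply Hag; lia. }
    exact (Hnc i Hi Hc). }
  set (f := fun e L => epsilon (inhabits (0, 0, 0)%nat) (fun d => good (upd e L d) (S L))).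
  set (e0 := fun _ : nat => (0, 0, 0)%nat).
  assert (Hgood : forall n, good (iterE f e0 n) n).
  { induction n as [|n IH]. apply Hbad.
    pose proof (epsilon_spec (inhabits (0, 0, 0)%nat) (fun d => good (upd (iterE f e0 n) n d) (S n)) (Hstep _ _ IH)) as HH.
    exact HH. }
  set (e := fun j => iterE f e0 (S j) j).
  assert (Hagree : forall n j, (j < n)%nat -> e j = iterE f e0 n j).
  { intros n j Hj. unfold e. symmetry. apply iterE_agree; lia. }
  assert (He : vpath al e).
  { intros j. destruct (Hgood (S j) O) as [e' [He' [Hag _]]]. unfold e. rewrite <- (Hag j ltac:(lia)). apply He'. }
  destruct (Hcov e He) as [i Hc].
  destruct (Hgood (kf i) (S i)) as [e' [He' [Hag Hnc]]].
  apply (Hnc i ltac:(lia)). apply (Hpref i e e'); auto.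
  intros j Hj. rewrite Hag by auto. apply Hagree; auto.
Qed.

Fixpoint maxk (kf : nat -> nat) (M : nat) : nat :=
  match M with O => O | S M' => Nat.max (maxk kf M') (kf M') end.

Lemma maxk_ge kf M i : (i < M)%nat -> (kf i <= maxk kf M)%nat.
Proof. induction M as [|M IH]; simpl; intros H. lia. destruct (Nat.eq_dec i M). subst; lia. specialize (IH ltac:(lia)). lia. Qed.

Fixpoint sumR (f : nat -> R) (M : nat) : R :=
  match M with O => 0 | S M' => sumR f M' + f M' end.

Lemma sumR_INR c M : INR (sumc c M) = sumR (fun i => INR (c i)) M.
Proof. induction M; simpl. reflexivity. rewrite plus_INR, IHM. reflexivity. Qed.

Lemma sumR_le f g M : (forall i, (i < M)%nat -> f i <= g i) -> sumR f M <= sumR g M.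
Proof. induction M; simpl; intros H. lra. assert (sumR f M <= sumR g M) by (apply IHM; intros; apply H; lia). specialize (H M ltac:(lia)). lra. Qed.

Lemma sumR_scal a f M : sumR (fun i => a * f i) M = a * sumR f M.
Proof. induction M; simpl. ring. rewrite IHM. ring. Qed.

Lemma sumR_sum_f f m : sumR f (S m) = sum_f_R0 f m.
Proof. induction m. simpl. ring. change (sumR f (S (S m))) with (sumR f (S m) + f (S m)). rewrite IHm. reflexivity. Qed.

Lemma sumR_partial f v M : (forall i, 0 <= f i) -> is_series f v -> sumR f M <= v.
Proof.
  intros Hf Hs. destruct M. simpl. apply (series_nonneg f v); auto.
  rewrite sumR_sum_f. apply series_partial; auto.
Qed.

Lemma c1_exists al V s : 0 <= s < V ->
  (forall e, 0 < e -> exists K, forall k, (K <= k)%nat -> V - e < phi al k) ->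
  exists c1, 0 < c1 /\ c1 <= 1 /\ forall k, c1 * exp (s * (INR k * ln 5)) <= NN al k.
Proof.
  intros [Hs0 Hs] H1. destruct (H1 (V - s) ltac:(lra)) as [K0 HK0].
  set (K := (K0 + 1)%nat). pose proof ln5_pos.
  exists (exp (- (s * (INR K * ln 5)))). split. apply exp_pos. split.
  { rewrite <- exp_0. apply exp_le. assert (0 <= s * (INR K * ln 5)) by (apply Rmult_le_pos; auto; apply Rmult_le_pos; [apply pos_INR|lra]). lra. }
  intros k. rewrite <- exp_plus. pose proof (NN_ge1 al k).
  destruct (Compare_dec.le_lt_dec K k) as [h|h].
  - rewrite <- (exp_ln (NN al k)) by lra. apply exp_le.
    assert (HkR : 0 < INR k) by (apply lt_0_INR; unfold K in h; lia).
    assert (ln (NN al k) = phi al k * (INR k * ln 5)) by (unfold phi; field; lra).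
    specialize (HK0 k ltac:(unfold K in h; lia)).
    assert (s * (INR k * ln 5) <= phi al k * (INR k * ln 5)) by (apply Rmult_le_compat_r; nra).
    assert (0 <= s * (INR K * ln 5)) by (apply Rmult_le_pos; auto; apply Rmult_le_pos; [apply pos_INR|lra]).
    lra.
  - apply Rle_trans with 1; auto. rewrite <- exp_0. apply exp_le.
    apply lt_INR in h.
    replace (- (s * (INR K * ln 5)) + s * (INR k * ln 5)) with (s * ((INR k - INR K) * ln 5)) by ring.
    assert ((INR k - INR K) * ln 5 <= 0) by (apply Rmult_le_0_r; lra). nra.
Qed.

Lemma hd_lower al V s : 0 <= s < V ->
  (forall e, 0 < e -> exists K, forall k, (K <= k)%nat -> V - e < phi al k) ->
  exists c, 0 < c /\ forall (U : nat -> pt -> Prop) (r : nat -> R) v,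
    (forall i, 0 < r i <= 1) -> (forall i, diam_le (U i) (r i)) ->
    (forall p, Kalpha al p -> exists i, U i p) ->
    is_series (fun i => Rpower (r i) s) v -> c <= v.
Proof.
  intros Hs H1. destruct (c1_exists al V s Hs H1) as [c1 [Hc1 [Hc1' Hc1N]]].
  pose proof ln5_pos as H5.
  set (E5 := exp (s * ln 5)). assert (HE5 : 0 < E5) by apply exp_pos.
  exists (c1 / (343 * E5)). split. apply Rdiv_lt_0_compat; lra.
  intros U r v Hr HU Hcov Hser.
  set (ki := fun i => epsilon (inhabits 0%nat) (fun k => / 5 ^ (k + 1) < r i <= / 5 ^ k)).
  assert (Hkis : forall i, / 5 ^ (ki i + 1) < r i <= / 5 ^ (ki i)).
  { intros i. apply (epsilon_spec (inhabits 0%nat) (fun k => / 5 ^ (k + 1) < r i <= / 5 ^ k)).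
    apply level_exists. apply Hr. }
  set (caught := fun i e => exists q, U i q /\ inQ (prefx e (ki i)) q).
  destruct (konig al caught ki) as [M HM].
  { intros i e e' Hag [q [Uq Hq]]. exists q. split; auto. replace (prefx e' (ki i)) with (prefx e (ki i)); auto.
    unfold prefx. apply map_ext_in. intros j Hj. apply in_seq in Hj. apply Hag; lia. }
  { intros e He. destruct (Hcov (pi e) (pi_K al e He)) as [i Hi]. exists i, (pi e). split; auto. apply (pi_inQ al); auto. }
  set (L := maxk ki M).
  assert (Hcount : (Nm al 0 L <= sumc (fun i => 343 * Nm al (ki i) (L - ki i)) M)%nat).
  { rewrite <- strs_len. apply (count_cover _ M _ (fun i s => exists q, U i q /\ inQ (firstn (ki i) s) q)).
    - apply strs_nodup.
    - intros s' Hs'. pose proof Hs' as Hs''. apply strs_spec in Hs''. destruct Hs'' as [Hv Hl].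
      destruct (HM (ext al s') (ext_vpath al s' Hv)) as [i [Hi [q [Uq Hq]]]]. exists i. split; auto. exists q. split; auto.
      rewrite pre_ext in Hq. exact Hq. rewrite Hl. apply maxk_ge; auto.
    - intros i Hi. destruct (box_count al (ki i) (U i)) as [P [HP1 HP2]].
      { intros a b Ha Hb. eapply Rle_trans. apply (HU i a b Ha Hb). apply Hkis. }
      exists (flat_map (fun p => map (fun q => p ++ q) (strs al (ki i) (L - ki i))) P). split.
      + rewrite (length_flat_map_const _ _ (Nm al (ki i) (L - ki i))). nia.
        intros p _. rewrite length_map, strs_len. reflexivity.
      + intros s' Hs' [q [Uq Hq]]. apply strs_spec in Hs'. destruct Hs' as [Hv Hl].
        assert (Hk : (ki i <= L)%nat) by (apply maxk_ge; auto).
        rewrite <- (firstn_skipn (ki i) s') in Hv.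
        apply valid_app in Hv. destruct Hv as [Hv1 Hv2].
        assert (Hl1 : length (firstn (ki i) s') = ki i) by (rewrite length_firstn; lia).
        apply in_flat_map. exists (firstn (ki i) s'). split.
        * apply HP2. apply strs_spec. split; auto. exists q; auto.
        * apply in_map_iff. exists (skipn (ki i) s'). split. apply firstn_skipn. apply strs_spec. split.
          rewrite Hl1 in Hv2. simpl in Hv2. exact Hv2. rewrite length_skipn. lia. }
  apply le_INR in Hcount. rewrite sumR_INR in Hcount. fold (NN al L) in Hcount.
  set (w := fun i => Rpower (r i) s).
  assert (Hterm : forall i, (i < M)%nat -> INR (343 * Nm al (ki i) (L - ki i)) <= NN al L * (343 * E5 / c1) * w i).
  { intros i Hi. assert (Hk : (ki i <= L)%nat) by (apply maxk_ge; auto).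
    pose proof (Nm_add al (ki i) 0 (L - ki i)) as HN. replace (ki i + (L - ki i))%nat with L in HN by lia.
    simpl (0 + ki i)%nat in HN.
    set (X := INR (Nm al (ki i) (L - ki i))). set (Y := NN al (ki i)).
    assert (HXY : X * Y = NN al L) by (unfold X, Y, NN; rewrite HN, mult_INR; ring).
    assert (HX : 0 <= X) by apply pos_INR.
    assert (Hexp : 1 <= exp (s * (INR (ki i) * ln 5)) * E5 * w i).
    { unfold E5, w, Rpower. rewrite <- !exp_plus. rewrite <- exp_0. apply exp_le.
      destruct (Hkis i) as [Hr1 _]. pose proof (pow5_pos (ki i + 1)).
      assert (ln (/ 5 ^ (ki i + 1)) < ln (r i)) by (apply ln_increasing; auto; apply Rinv_0_lt_compat; lra).
      rewrite ln_Rinv, ln_pow, plus_INR in H0 by lra. simpl (INR 1) in H0.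
      assert (0 <= s * (ln (r i) + (INR (ki i) + 1) * ln 5)) by (apply Rmult_le_pos; lra). nra. }
    assert (HYc : c1 <= Y * E5 * w i).
    { pose proof (Hc1N (ki i)). fold Y in H. assert (0 <= E5 * w i) by (unfold w; pose proof (Rpower_pos (r i) s); nra).
      nra. }
    rewrite mult_INR. fold X. replace (INR 343) with 343 by (simpl; lra).
    apply Rmult_le_reg_r with c1; auto.
    replace (NN al L * (343 * E5 / c1) * w i * c1) with (343 * (X * (Y * E5 * w i))) by (rewrite <- HXY; field; lra).
    nra. }
  assert (Hsum : NN al L <= NN al L * (343 * E5 / c1) * sumR w M).
  { eapply Rle_trans. exact Hcount. rewrite <- sumR_scal. apply sumR_le. exact Hterm. }
  pose proof (NN_ge1 al L).
  assert (Hw : sumR w M <= v) by (apply sumR_partial; auto; intros; left; apply Rpower_pos).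
  assert (1 <= (343 * E5 / c1) * sumR w M).
  { apply Rmult_le_reg_l with (NN al L). lra. rewrite Rmult_1_r. rewrite <- Rmult_assoc. exact Hsum. }
  apply Rmult_le_reg_l with (343 * E5 / c1). apply Rdiv_lt_0_compat; lra.
  replace (343 * E5 / c1 * (c1 / (343 * E5))) with 1 by (field; lra).
  assert (0 < 343 * E5 / c1) by (apply Rdiv_lt_0_compat; lra). nra.
Qed.

Lemma hm_pos al V s : 0 <= s < V ->
  (forall e, 0 < e -> exists K, forall k, (K <= k)%nat -> V - e < phi al k) ->
  hausdorff_measure s (Kalpha al) <> Finite 0.
Proof.
  intros Hs H1 Heq. destruct (hd_lower al V s Hs H1) as [c [Hc Hcv]].
  assert (Hd : Rbar_le c (hausdorff_delta s 1 (Kalpha al))).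
  { unfold hausdorff_delta.
    match goal with |- Rbar_le _ (Glb_Rbar ?E) => destruct (Glb_Rbar_correct E) as [_ Hglb] end.
    apply Hglb. intros x [U [r [Hr [HU [Hcov Hser]]]]]. simpl. apply (Hcv U r x); auto. }
  assert (Hm : Rbar_le (hausdorff_delta s 1 (Kalpha al)) (hausdorff_measure s (Kalpha al))).
  { unfold hausdorff_measure. apply lub_ge. exists 1. split; auto; lra. }
  rewrite Heq in Hm. pose proof (Rbar_le_trans _ _ _ Hd Hm). simpl in H. lra.
Qed.

Lemma limsup_range al (L : R) : is_LimSup_seq (lambda_m al) L -> 0 <= L <= 1.
Proof.
  intros HL. red in HL. split.
  - destruct (Rle_or_lt 0 L) as [h|h]; auto. exfalso.
    assert (Hp : 0 < - L) by lra. destruct (HL (mkposreal _ Hp)) as [_ [N HN]].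
    specialize (HN N (le_n _)). simpl in HN. pose proof (lambda_bounds al N). lra.
  - destruct (Rle_or_lt L 1) as [h|h]; auto. exfalso.
    assert (Hp : 0 < L - 1) by lra. destruct (HL (mkposreal _ Hp)) as [HN _].
    destruct (HN O) as [n [_ Hn]]. simpl in Hn. pose proof (lambda_bounds al n). lra.
Qed.

Lemma log5_13_gt1 : 1 < log5 13.
Proof.
  unfold log5. pose proof ln5_pos. apply (Rmult_lt_reg_r (ln 5)); auto.
  unfold Rdiv. rewrite Rmult_assoc, Rinv_l, Rmult_1_r, Rmult_1_l by lra. apply ln_increasing; lra.
Qed.

Lemma thm_haus al : hausdorff_dim (Kalpha al) =
  Finite (real (lambda_sup al) * log5 13 + (1 - real (lambda_sup al)) * log5 44).
Proof.
  destruct (limsup_fin al) as [L [-> HL]]. simpl. destruct (sup_props al L HL) as [H1 H2].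
  pose proof (limsup_range al L HL). pose proof log5_13_gt1. pose proof log5_bounds.
  set (V := L * log5 13 + (1 - L) * log5 44) in *.
  assert (HV : 1 < V) by (unfold V; nra).
  unfold hausdorff_dim.
  match goal with |- Glb_Rbar ?E = _ => destruct (Glb_Rbar_correct E) as [Hlb Hglb]; set (g := Glb_Rbar E) in * end.
  assert (A : Rbar_le (Finite V) g).
  { apply Hglb. intros s [Hs0 Hs]. simpl. destruct (Rle_or_lt V s) as [h|h]; auto.
    exfalso. apply (hm_pos al V s); auto. }
  assert (B : Rbar_le g (Finite V)).
  { apply rbar_le_eps. intros e He. apply Hlb. split. lra. apply (hm_zero al V); auto; lra. }
  destruct g as [g| |]; simpl in A, B; try contradiction. f_equal. lra.
Qed.

Lemma nzeros_add al a b : (nzeros al a <= nzeros al (a + b) <= nzeros al a + b)%nat.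
Proof.
  induction b. rewrite Nat.add_0_r. lia. replace (a + S b)%nat with (S (a + b))%nat by lia. simpl.
  destruct (al (a + b)%nat); lia.
Qed.

Lemma per_shift al n0 per : (forall n, (n0 <= n)%nat -> al (n + per)%nat = al n) ->
  forall d, nzeros al (n0 + d + per) = (nzeros al (n0 + d) + (nzeros al (n0 + per) - nzeros al n0))%nat.
Proof.
  intros Hp d. induction d as [|d IH].
  - rewrite Nat.add_0_r. pose proof (nzeros_add al n0 per). lia.
  - replace (n0 + S d + per)%nat with (S (n0 + d + per))%nat by lia.
    replace (n0 + S d)%nat with (S (n0 + d))%nat by lia. simpl nzeros. rewrite IH.
    replace (n0 + d + per)%nat with ((n0 + d) + per)%nat by lia. rewrite Hp by lia.
    pose proof (nzeros_add al n0 per). destruct (al (n0 + d)%nat); lia.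
Qed.

Lemma preper_lim al : preperiodic al -> exists rho : R, is_lim_seq (lambda_m al) rho.
Proof.
  intros [n0 [per [Hper Hp]]].
  set (Z := (nzeros al (n0 + per) - nzeros al n0)%nat).
  assert (HZ : (Z <= per)%nat) by (unfold Z; pose proof (nzeros_add al n0 per); lia).
  assert (HperR : 0 < INR per) by (apply lt_0_INR; lia).
  set (rho := INR Z / INR per).
  assert (Hrho : 0 <= rho <= 1).
  { unfold rho. split. apply Rdiv_le_0_compat; auto. apply pos_INR.
    apply (Rmult_le_reg_r (INR per)); auto. unfold Rdiv. rewrite Rmult_assoc, Rinv_l by lra.
    apply le_INR in HZ. lra. }
  set (B := 2 * INR (n0 + per)).
  assert (Herr : forall N m, (m <= N)%nat -> Rabs (INR (nzeros al m) - INR m * rho) <= B).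
  { induction N as [|N IH]; intros m Hm.
    - assert (m = O) by lia. subst. simpl. rewrite Rmult_0_l, Rminus_0_r, Rabs_R0. unfold B.
      pose proof (pos_INR (n0 + per)). lra.
    - destruct (Compare_dec.lt_dec m (n0 + per)) as [h|h].
      + pose proof (nzeros_le al m) as Hz. apply le_INR in Hz. pose proof (pos_INR (nzeros al m)).
        apply lt_INR in h. pose proof (pos_INR m).
        apply Rabs_le. unfold B. split; nra.
      + set (m' := (m - per)%nat).
        assert (Hm' : nzeros al m = (nzeros al m' + Z)%nat).
        { unfold Z. pose proof (per_shift al n0 per Hp (m' - n0)) as HH.
          replace (n0 + (m' - n0) + per)%nat with m in HH by (unfold m'; lia).
          replace (n0 + (m' - n0))%nat with m' in HH by (unfold m'; lia). exact HH. }
        rewrite Hm', plus_INR. replace (INR m) with (INR m' + INR per) by (rewrite <- plus_INR; f_equal; unfold m'; lia).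
        replace (INR (nzeros al m') + INR Z - (INR m' + INR per) * rho) with (INR (nzeros al m') - INR m' * rho)
          by (unfold rho; field; lra).
        apply IH. unfold m'; lia. }
  exists rho. apply is_lim_seq_spec. intros eps.
  destruct (nat_large (B / eps)) as [K HK]. exists (K + 1)%nat. intros n Hn.
  specialize (HK n ltac:(lia)). assert (HnR : 0 < INR n) by (apply lt_0_INR; lia).
  unfold lambda_m. replace (INR (nzeros al n) / INR n - rho) with ((INR (nzeros al n) - INR n * rho) / INR n) by (field; lra).
  unfold Rdiv at 1. rewrite Rabs_mult, Rabs_inv, (Rabs_pos_eq (INR n)) by lra.
  specialize (Herr n n (le_n _)). pose proof (cond_pos eps).
  apply (Rmult_lt_reg_r (INR n)); auto. rewrite Rmult_assoc, Rinv_l, Rmult_1_r by lra.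
  apply (Rmult_lt_compat_l eps) in HK; auto. unfold Rdiv in HK.
  rewrite <- Rmult_assoc, (Rmult_comm eps B), Rmult_assoc, Rinv_r, Rmult_1_r in HK by lra. lra.
Qed.

Theorem theorem4 (alpha : nat -> bool) :
  lower_box_dim (Kalpha alpha) =
    Finite (real (lambda_sup alpha) * log5 13 + (1 - real (lambda_sup alpha)) * log5 44) /\
  upper_box_dim (Kalpha alpha) =
    Finite (real (lambda_inf alpha) * log5 13 + (1 - real (lambda_inf alpha)) * log5 44) /\
  (preperiodic alpha ->
     let v := real (lambda_lim alpha) * log5 13 + (1 - real (lambda_lim alpha)) * log5 44 in
     hausdorff_dim (Kalpha alpha) = Finite v /\
     lower_box_dim (Kalpha alpha) = Finite v /\
     upper_box_dim (Kalpha alpha) = Finite v).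
Proof.
  split. apply thm_lower. split. apply thm_upper.
  intros Hpp. destruct (preper_lim alpha Hpp) as [rho Hrho].
  assert (E1 : lambda_sup alpha = Finite rho) by (apply is_LimSup_seq_unique, is_lim_LimSup_seq; exact Hrho).
  assert (E2 : lambda_inf alpha = Finite rho) by (apply is_LimInf_seq_unique, is_lim_LimInf_seq; exact Hrho).
  assert (E3 : lambda_lim alpha = Finite rho) by (apply is_lim_seq_unique; exact Hrho).
  cbv zeta. rewrite E3. split; [|split].
  - rewrite thm_haus, E1. reflexivity.
  - rewrite thm_lower, E1. reflexivity.
  - rewrite thm_upper, E2. reflexivity.
Qed.
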